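(* $F_v(K_{1,1,2},K_{1,2,2};4)\le 26$; that is, there exists a $K_4$-free graph $H$ on 26 vertices such that for every partition $V(H)=R\cup B$, the subgraph induced by $R$ contains $K_{1,1,2}$ or the subgraph induced by $B$ contains $K_{1,2,2}$.
   Context: All graphs are finite and simple. $K_{p,q,s}$ is the complete tripartite graph with parts of sizes $p,q,s$ (so $K_{1,1,2}$ is $K_4$ minus an edge). ''Contains'' means has a (not necessarily induced) subgraph isomorphic to. $F_v(H_1,H_2;k)$ is the minimum number of vertices of a $K_k$-free graph $G$ such that for every partition $V(G)=X_1\cup X_2$ there is $i$ with the subgraph induced by $X_i$ containing $H_i$. *)

(* Defs.v *)
From mathcomp Require Import all_boot.
Set Implicit Arguments. Unset Strict Implicit. Unset Printing Implicit Defensive.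

Definition simple_graph (T : finType) (e : rel T) : Prop :=
  symmetric e /\ irreflexive e.

Definition tripV (p q s : nat) : finType := ('I_p + 'I_q + 'I_s)%type.

Definition trip_part (p q s : nat) (v : tripV p q s) : nat :=
  match v with
  | inl (inl _) => 0
  | inl (inr _) => 1
  | inr _ => 2
  end.

Definition trip_edge (p q s : nat) : rel (tripV p q s) :=
  fun u v => trip_part u != trip_part v.

Definition contains_in (T U : finType) (e : rel T) (X : {set T}) (eH : rel U) : Prop :=
  exists f : U -> T,
    [/\ injective f, (forall u, f u \in X) & (forall u v, eH u v -> e (f u) (f v))].

Definition contains_Kpqs (T : finType) (e : rel T) (X : {set T}) (p q s : nat) : Prop :=
  contains_in e X (@trip_edge p q s).

Definition Kk_free (T : finType) (e : rel T) (k : nat) : Prop :=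
  ~ exists f : 'I_k -> T, injective f /\ (forall i j, i != j -> e (f i) (f j)).

(* Main.v *)
Require Import Defs.
From mathcomp Require Import all_boot.
Set Implicit Arguments. Unset Strict Implicit. Unset Printing Implicit Defensive.

Inductive tree := Nd of nat & tree & tree | Lf of bool & seq nat.

Definition adjl : seq (seq nat) := [:: [:: 4; 5; 10; 11; 12; 13; 16; 18; 19; 20; 21; 22; 23; 24];
  [:: 4; 5; 10; 11; 12; 13; 16; 18; 19; 20; 21; 22; 23; 24];
  [:: 4; 5; 8; 9; 10; 11; 23; 24; 25];
  [:: 4; 5; 8; 9; 10; 11; 23; 24; 25];
  [:: 0; 1; 2; 3; 6; 7; 10; 11; 12; 13; 14; 15; 23; 24; 25];
  [:: 0; 1; 2; 3; 6; 7; 10; 11; 12; 13; 14; 15; 23; 24; 25];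
  [:: 4; 5; 14; 15; 16; 17; 18; 19; 23; 24; 25];
  [:: 4; 5; 14; 15; 16; 17; 18; 19; 23; 24; 25];
  [:: 2; 3; 10; 11; 12; 13; 14; 15; 16; 18; 19; 20; 21; 23; 24];
  [:: 2; 3; 10; 11; 12; 13; 14; 15; 16; 18; 19; 20; 21; 23; 24];
  [:: 0; 1; 2; 3; 4; 5; 8; 9; 14; 15; 16; 22];
  [:: 0; 1; 2; 3; 4; 5; 8; 9; 14; 15; 16; 22];
  [:: 0; 1; 4; 5; 8; 9; 16; 18; 19; 25];
  [:: 0; 1; 4; 5; 8; 9; 16; 18; 19; 25];
  [:: 4; 5; 6; 7; 8; 9; 10; 11; 17; 18; 19; 20; 21; 22];
  [:: 4; 5; 6; 7; 8; 9; 10; 11; 17; 18; 19; 20; 21; 22];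
  [:: 0; 1; 6; 7; 8; 9; 10; 11; 12; 13; 17; 20; 21];
  [:: 6; 7; 14; 15; 16; 20; 21; 23; 24; 25];
  [:: 0; 1; 6; 7; 8; 9; 12; 13; 14; 15; 22; 23; 24; 25];
  [:: 0; 1; 6; 7; 8; 9; 12; 13; 14; 15; 22; 23; 24; 25];
  [:: 0; 1; 8; 9; 14; 15; 16; 17; 23; 24];
  [:: 0; 1; 8; 9; 14; 15; 16; 17; 23; 24];
  [:: 0; 1; 10; 11; 14; 15; 18; 19];
  [:: 0; 1; 2; 3; 4; 5; 6; 7; 8; 9; 17; 18; 19; 20; 21];
  [:: 0; 1; 2; 3; 4; 5; 6; 7; 8; 9; 17; 18; 19; 20; 21];
  [:: 2; 3; 4; 5; 6; 7; 12; 13; 17; 18; 19]].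

Definition T0 : tree :=
(Nd 23 (Nd 24 (Nd 18 (Nd 0 (Lf true [:: 0; 18; 23; 24]) (Nd 19 (Nd 1 (Lf true [:: 1; 19; 23; 24]) (Nd 4 (Nd 2 (Lf true [:: 2; 4; 23; 24]) (Nd 5 (Nd 3 (Lf true [:: 3; 5; 23; 24]) (Nd 8 (Lf true [:: 8; 18; 23; 24]) (Nd 9 (Lf true [:: 9; 18; 23; 24]) (Nd 10 (Nd 14 (Lf true [:: 10; 14; 4; 5]) (Nd 11 (Nd 15 (Lf true [:: 4; 15; 10; 11]) (Nd 20 (Nd 17 (Lf true [:: 17; 20; 23; 24]) (Nd 21 (Nd 6 (Lf true [:: 4; 6; 23; 24]) (Nd 7 (Lf true [:: 4; 7; 23; 24]) (Lf false [:: 17; 6; 7; 14; 15]))) (Lf false [:: 21; 8; 17; 14; 15]))) (Lf false [:: 20; 8; 9; 14; 15]))) (Lf false [:: 11; 2; 14; 8; 9]))) (Lf false [:: 10; 2; 3; 8; 9]))))) (Nd 8 (Lf true [:: 8; 18; 23; 24]) (Nd 9 (Lf true [:: 9; 18; 23; 24]) (Nd 14 (Nd 6 (Lf true [:: 4; 6; 14; 23]) (Nd 15 (Nd 7 (Lf true [:: 4; 7; 14; 15]) (Nd 10 (Lf true [:: 4; 10; 14; 15]) (Nd 11 (Lf true [:: 4; 11; 14; 15]) (Lf false [:: 2; 5; 8; 10; 11])))) (Nd 10 (Nd 3 (Lf true [:: 3; 4; 10; 23]) (Nd 11 (Lf true [:: 4; 14; 10; 11]) (Lf false [:: 11; 2;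 3; 5; 8]))) (Lf false [:: 10; 2; 15; 5; 8])))) (Nd 10 (Nd 3 (Lf true [:: 3; 4; 10; 23]) (Nd 11 (Nd 15 (Lf true [:: 4; 15; 10; 11]) (Nd 20 (Nd 17 (Lf true [:: 17; 20; 23; 24]) (Nd 6 (Lf true [:: 4; 6; 23; 24]) (Lf false [:: 6; 5; 17; 14; 15]))) (Lf false [:: 20; 8; 9; 14; 15]))) (Lf false [:: 11; 2; 3; 5; 8]))) (Lf false [:: 10; 2; 14; 5; 8]))))))) (Nd 5 (Nd 2 (Lf true [:: 2; 5; 23; 24]) (Nd 8 (Lf true [:: 8; 18; 23; 24]) (Nd 9 (Lf true [:: 9; 18; 23; 24]) (Nd 14 (Nd 6 (Lf true [:: 5; 6; 14; 23]) (Nd 15 (Nd 7 (Lf true [:: 5; 7; 14; 15]) (Nd 10 (Lf true [:: 5; 10; 14; 15]) (Nd 11 (Lf true [:: 5; 11; 14; 15]) (Lf false [:: 2; 4; 8; 10; 11])))) (Nd 10 (Nd 3 (Lf true [:: 3; 5; 10; 23]) (Nd 11 (Lf true [:: 5; 14; 10; 11]) (Lf false [:: 11; 2; 3; 4; 8]))) (Lf false [:: 10; 2; 15; 4; 8])))) (Nd 10 (Nd 3 (Lf true [:: 3; 5; 10; 23]) (Nd 11 (Nd 15 (Lf true [:: 5; 15; 10; 11]) (Nd 20 (Nd 17 (Lf true [:: 17; 20; 23; 24]) (Nd 6 (Lf true [:: 5; 6; 23; 24]) (Lf false [:: 6; 4; 17; 14; 15]))) (Lf false [:: 20; 8; 9;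 14; 15]))) (Lf false [:: 11; 2; 3; 4; 8]))) (Lf false [:: 10; 2; 14; 4; 8])))))) (Nd 10 (Nd 8 (Lf true [:: 8; 18; 23; 24]) (Nd 9 (Lf true [:: 9; 18; 23; 24]) (Nd 14 (Nd 6 (Lf true [:: 6; 14; 18; 19]) (Nd 15 (Nd 7 (Lf true [:: 7; 15; 18; 19]) (Nd 25 (Nd 12 (Lf true [:: 12; 25; 18; 19]) (Lf false [:: 12; 0; 1; 4; 5])) (Lf false [:: 25; 4; 5; 6; 7]))) (Nd 25 (Nd 7 (Lf true [:: 7; 18; 14; 25]) (Lf false [:: 15; 4; 5; 6; 7])) (Lf false [:: 6; 4; 5; 15; 25])))) (Nd 11 (Nd 15 (Nd 6 (Lf true [:: 6; 15; 18; 19]) (Nd 25 (Nd 7 (Lf true [:: 7; 18; 15; 25]) (Lf false [:: 14; 4; 5; 6; 7])) (Lf false [:: 6; 4; 5; 14; 25]))) (Nd 6 (Lf true [:: 6; 18; 23; 24]) (Lf false [:: 6; 4; 5; 14; 15]))) (Lf false [:: 11; 0; 14; 4; 5]))))) (Lf false [:: 10; 0; 1; 4; 5]))))) (Nd 4 (Nd 1 (Lf true [:: 1; 4; 23; 24]) (Nd 5 (Nd 2 (Lf true [:: 2; 5; 23; 24]) (Nd 8 (Lf true [:: 8; 18; 23; 24]) (Nd 9 (Lf true [:: 9; 18; 23; 24]) (Nd 14 (Nd 6 (Lf true [:: 4; 6; 14; 23]) (Nd 15 (Nd 7 (Lf true [:: 4; 7; 14; 15]) (Nd 10 (Lf true [::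 4; 10; 14; 15]) (Nd 11 (Lf true [:: 4; 11; 14; 15]) (Lf false [:: 2; 8; 9; 10; 11])))) (Nd 10 (Lf true [:: 10; 14; 4; 5]) (Lf false [:: 10; 2; 15; 8; 9])))) (Nd 10 (Nd 3 (Lf true [:: 3; 4; 10; 23]) (Nd 11 (Nd 15 (Lf true [:: 4; 15; 10; 11]) (Lf false [:: 19; 8; 9; 14; 15])) (Lf false [:: 11; 2; 3; 8; 9]))) (Lf false [:: 10; 2; 14; 8; 9])))))) (Nd 12 (Nd 8 (Lf true [:: 8; 18; 12; 23]) (Nd 9 (Lf true [:: 9; 18; 12; 23]) (Nd 14 (Nd 6 (Lf true [:: 4; 6; 14; 23]) (Nd 15 (Nd 7 (Lf true [:: 4; 7; 14; 15]) (Nd 25 (Lf true [:: 12; 25; 4; 18]) (Lf false [:: 25; 5; 19; 6; 7]))) (Nd 25 (Lf true [:: 12; 25; 4; 18]) (Lf false [:: 6; 5; 19; 15; 25])))) (Nd 10 (Nd 2 (Lf true [:: 2; 4; 10; 23]) (Nd 11 (Nd 3 (Lf true [:: 3; 4; 10; 11]) (Nd 15 (Lf true [:: 4; 15; 10; 11]) (Lf false [:: 19; 8; 9; 14; 15]))) (Lf false [:: 11; 2; 14; 5; 8]))) (Lf false [:: 14; 8; 9; 10; 19]))))) (Lf false [:: 12; 0; 1; 5; 19])))) (Nd 5 (Nd 1 (Lf true [:: 1; 5; 23; 24]) (Nd 12 (Nd 8 (Lf true [:: 8; 18; 12; 23]) (Nd 9 (Lf true [:: 9; 18; 12; 23]) (Nd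 14 (Nd 6 (Lf true [:: 5; 6; 14; 23]) (Nd 15 (Nd 7 (Lf true [:: 5; 7; 14; 15]) (Nd 25 (Lf true [:: 12; 25; 5; 18]) (Lf false [:: 25; 4; 19; 6; 7]))) (Nd 25 (Lf true [:: 12; 25; 5; 18]) (Lf false [:: 6; 4; 19; 15; 25])))) (Nd 10 (Nd 2 (Lf true [:: 2; 5; 10; 23]) (Nd 11 (Nd 3 (Lf true [:: 3; 5; 10; 11]) (Nd 15 (Lf true [:: 5; 15; 10; 11]) (Lf false [:: 19; 8; 9; 14; 15]))) (Lf false [:: 11; 2; 14; 4; 8]))) (Lf false [:: 14; 8; 9; 10; 19]))))) (Lf false [:: 12; 0; 1; 4; 19]))) (Nd 8 (Lf true [:: 8; 18; 23; 24]) (Nd 9 (Lf true [:: 9; 18; 23; 24]) (Nd 1 (Lf true [:: 1; 18; 23; 24]) (Nd 10 (Nd 14 (Nd 6 (Lf true [:: 6; 18; 14; 23]) (Nd 15 (Nd 7 (Lf true [:: 7; 18; 14; 15]) (Nd 25 (Nd 11 (Nd 22 (Lf true [:: 11; 22; 14; 15]) (Nd 12 (Nd 13 (Lf true [:: 18; 25; 12; 13]) (Lf false [:: 13; 0; 1; 4; 5])) (Lf false [:: 19; 0; 1; 12; 22]))) (Lf false [:: 11; 0; 1; 4; 5])) (Lf false [:: 25; 4; 5; 6; 7]))) (Nd 25 (Nd 7 (Lf true [:: 7; 18; 14; 25]) (Lf false [:: 15; 4; 5; 6; 7])) (Lf false [:: 6; 4; 5; 15; 25])))) (Nd 11 (Nd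 15 (Nd 6 (Lf true [:: 6; 18; 15; 23]) (Nd 25 (Nd 7 (Lf true [:: 7; 18; 15; 25]) (Lf false [:: 14; 4; 5; 6; 7])) (Lf false [:: 6; 4; 5; 14; 25]))) (Lf false [:: 19; 8; 9; 14; 15])) (Lf false [:: 11; 0; 14; 4; 5]))) (Lf false [:: 10; 0; 1; 4; 5]))))))))) (Nd 19 (Nd 0 (Lf true [:: 0; 19; 23; 24]) (Nd 4 (Nd 1 (Lf true [:: 1; 4; 23; 24]) (Nd 5 (Nd 2 (Lf true [:: 2; 5; 23; 24]) (Nd 8 (Lf true [:: 8; 19; 23; 24]) (Nd 9 (Lf true [:: 9; 19; 23; 24]) (Nd 14 (Nd 6 (Lf true [:: 4; 6; 14; 23]) (Nd 15 (Nd 7 (Lf true [:: 4; 7; 14; 15]) (Nd 10 (Lf true [:: 4; 10; 14; 15]) (Nd 11 (Lf true [:: 4; 11; 14; 15]) (Lf false [:: 2; 8; 9; 10; 11])))) (Nd 10 (Lf true [:: 10; 14; 4; 5]) (Lf false [:: 10; 2; 15; 8; 9])))) (Nd 10 (Nd 3 (Lf true [:: 3; 4; 10; 23]) (Nd 11 (Nd 15 (Lf true [:: 4; 15; 10; 11]) (Lf false [:: 18; 8; 9; 14; 15])) (Lf false [:: 11; 2; 3; 8; 9]))) (Lf false [:: 10; 2; 14; 8; 9])))))) (Nd 12 (Nd 8 (Lf true [:: 8; 19; 12; 23]) (Nd 9 (Lf true [:: 9; 19; 12; 23]) (Nd 14 (Nd 6 (Lf true [:: 4; 6; 14; 23]) (Nd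 15 (Nd 7 (Lf true [:: 4; 7; 14; 15]) (Nd 25 (Lf true [:: 12; 25; 4; 19]) (Lf false [:: 25; 5; 18; 6; 7]))) (Nd 25 (Lf true [:: 12; 25; 4; 19]) (Lf false [:: 6; 5; 18; 15; 25])))) (Nd 10 (Nd 2 (Lf true [:: 2; 4; 10; 23]) (Nd 11 (Nd 3 (Lf true [:: 3; 4; 10; 11]) (Nd 15 (Lf true [:: 4; 15; 10; 11]) (Lf false [:: 18; 8; 9; 14; 15]))) (Lf false [:: 11; 2; 14; 5; 8]))) (Lf false [:: 14; 8; 9; 10; 18]))))) (Lf false [:: 12; 0; 1; 5; 18])))) (Nd 5 (Nd 1 (Lf true [:: 1; 5; 23; 24]) (Nd 12 (Nd 8 (Lf true [:: 8; 19; 12; 23]) (Nd 9 (Lf true [:: 9; 19; 12; 23]) (Nd 14 (Nd 6 (Lf true [:: 5; 6; 14; 23]) (Nd 15 (Nd 7 (Lf true [:: 5; 7; 14; 15]) (Nd 25 (Lf true [:: 12; 25; 5; 19]) (Lf false [:: 25; 4; 18; 6; 7]))) (Nd 25 (Lf true [:: 12; 25; 5; 19]) (Lf false [:: 6; 4; 18; 15; 25])))) (Nd 10 (Nd 2 (Lf true [:: 2; 5; 10; 23]) (Nd 11 (Nd 3 (Lf true [:: 3; 5; 10; 11]) (Nd 15 (Lf true [:: 5; 15; 10; 11]) (Lf false [:: 18; 8; 9; 14; 15]))) (Lf false [:: 11; 2; 14; 4; 8]))) (Lf false [:: 14; 8; 9; 10; 18]))))) (Lf false [:: 12; 0; 1;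 4; 18]))) (Nd 8 (Lf true [:: 8; 19; 23; 24]) (Nd 9 (Lf true [:: 9; 19; 23; 24]) (Nd 1 (Lf true [:: 1; 19; 23; 24]) (Nd 10 (Nd 14 (Nd 6 (Lf true [:: 6; 19; 14; 23]) (Nd 15 (Nd 7 (Lf true [:: 7; 19; 14; 15]) (Nd 25 (Nd 11 (Nd 22 (Lf true [:: 11; 22; 14; 15]) (Nd 12 (Nd 13 (Lf true [:: 19; 25; 12; 13]) (Lf false [:: 13; 0; 1; 4; 5])) (Lf false [:: 18; 0; 1; 12; 22]))) (Lf false [:: 11; 0; 1; 4; 5])) (Lf false [:: 25; 4; 5; 6; 7]))) (Nd 25 (Nd 7 (Lf true [:: 7; 19; 14; 25]) (Lf false [:: 15; 4; 5; 6; 7])) (Lf false [:: 6; 4; 5; 15; 25])))) (Nd 11 (Nd 15 (Nd 6 (Lf true [:: 6; 19; 15; 23]) (Nd 25 (Nd 7 (Lf true [:: 7; 19; 15; 25]) (Lf false [:: 14; 4; 5; 6; 7])) (Lf false [:: 6; 4; 5; 14; 25]))) (Lf false [:: 18; 8; 9; 14; 15])) (Lf false [:: 11; 0; 14; 4; 5]))) (Lf false [:: 10; 0; 1; 4; 5])))))))) (Nd 4 (Nd 0 (Lf true [:: 0; 4; 23; 24]) (Nd 5 (Nd 1 (Lf true [:: 1; 5; 23; 24]) (Nd 12 (Nd 25 (Lf true [:: 12; 25; 4; 5]) (Nd 13 (Nd 8 (Nd 2 (Lf true [:: 2; 8; 23; 24]) (Nd 9 (Nd 3 (Lf true [:: 3;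 9; 23; 24]) (Nd 14 (Nd 6 (Lf true [:: 4; 6; 14; 23]) (Nd 15 (Nd 7 (Lf true [:: 4; 7; 14; 15]) (Lf false [:: 25; 6; 7; 18; 19])) (Lf false [:: 6; 15; 25; 18; 19]))) (Nd 6 (Lf true [:: 4; 6; 23; 24]) (Lf false [:: 6; 14; 25; 18; 19])))) (Nd 14 (Nd 6 (Lf true [:: 4; 6; 14; 23]) (Nd 15 (Nd 7 (Lf true [:: 4; 7; 14; 15]) (Lf false [:: 25; 6; 7; 18; 19])) (Lf false [:: 6; 15; 25; 18; 19]))) (Nd 6 (Lf true [:: 4; 6; 23; 24]) (Lf false [:: 6; 14; 25; 18; 19]))))) (Nd 9 (Nd 2 (Lf true [:: 2; 9; 23; 24]) (Nd 14 (Nd 6 (Lf true [:: 4; 6; 14; 23]) (Nd 15 (Nd 7 (Lf true [:: 4; 7; 14; 15]) (Lf false [:: 25; 6; 7; 18; 19])) (Lf false [:: 6; 15; 25; 18; 19]))) (Nd 6 (Lf true [:: 4; 6; 23; 24]) (Lf false [:: 6; 14; 25; 18; 19])))) (Nd 14 (Nd 6 (Lf true [:: 4; 6; 14; 23]) (Nd 15 (Nd 7 (Lf true [:: 4; 7; 14; 15]) (Lf false [:: 25; 6; 7; 18; 19])) (Lf false [:: 6; 15; 25; 18; 19]))) (Lf false [:: 14; 8; 9; 18; 19])))) (Lf false [:: 13; 0; 25; 18; 19]))) (Lf false [:: 12; 0; 1; 18; 19]))) (Nd 8 (Nd 2 (Lf true [:: 2; 8; 23; 24]) (Nd 9 (Nd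 3 (Lf true [:: 3; 9; 23; 24]) (Nd 1 (Lf true [:: 1; 4; 23; 24]) (Nd 12 (Nd 16 (Lf true [:: 12; 16; 8; 9]) (Nd 10 (Nd 14 (Lf true [:: 10; 14; 4; 8]) (Nd 22 (Nd 15 (Lf true [:: 10; 15; 4; 22]) (Nd 6 (Lf true [:: 4; 6; 23; 24]) (Lf false [:: 6; 5; 18; 14; 15]))) (Lf false [:: 22; 0; 14; 18; 19]))) (Lf false [:: 10; 0; 1; 5; 16]))) (Lf false [:: 12; 0; 1; 5; 18])))) (Nd 12 (Nd 1 (Lf true [:: 1; 4; 12; 23]) (Nd 13 (Nd 25 (Lf true [:: 4; 25; 12; 13]) (Nd 14 (Nd 6 (Lf true [:: 4; 6; 14; 23]) (Nd 15 (Nd 7 (Lf true [:: 4; 7; 14; 15]) (Lf false [:: 25; 5; 18; 6; 7])) (Lf false [:: 6; 5; 18; 15; 25]))) (Nd 6 (Lf true [:: 4; 6; 23; 24]) (Lf false [:: 6; 5; 18; 14; 25])))) (Lf false [:: 13; 0; 1; 5; 18]))) (Lf false [:: 12; 0; 9; 18; 19])))) (Nd 12 (Nd 1 (Lf true [:: 1; 4; 12; 23]) (Nd 13 (Nd 25 (Lf true [:: 4; 25; 12; 13]) (Nd 9 (Nd 2 (Lf true [:: 2; 9; 23; 24]) (Nd 14 (Nd 6 (Lf true [:: 4; 6; 14; 23]) (Nd 15 (Nd 7 (Lf true [:: 4; 7; 14; 15]) (Lf false [:: 25; 5; 18; 6; 7])) (Lf false [:: 6; 5; 18; 15; 25])))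 (Nd 6 (Lf true [:: 4; 6; 23; 24]) (Lf false [:: 6; 5; 18; 14; 25])))) (Nd 14 (Nd 6 (Lf true [:: 4; 6; 14; 23]) (Nd 15 (Nd 7 (Lf true [:: 4; 7; 14; 15]) (Lf false [:: 25; 5; 18; 6; 7])) (Lf false [:: 6; 5; 18; 15; 25]))) (Lf false [:: 14; 8; 9; 18; 19])))) (Lf false [:: 13; 0; 1; 5; 18]))) (Lf false [:: 12; 0; 8; 18; 19]))))) (Nd 5 (Nd 0 (Lf true [:: 0; 5; 23; 24]) (Nd 8 (Nd 2 (Lf true [:: 2; 8; 23; 24]) (Nd 9 (Nd 3 (Lf true [:: 3; 9; 23; 24]) (Nd 1 (Lf true [:: 1; 5; 23; 24]) (Nd 12 (Nd 16 (Lf true [:: 12; 16; 8; 9]) (Nd 10 (Nd 14 (Lf true [:: 10; 14; 5; 8]) (Nd 22 (Nd 15 (Lf true [:: 10; 15; 5; 22]) (Nd 6 (Lf true [:: 5; 6; 23; 24]) (Lf false [:: 6; 4; 18; 14; 15]))) (Lf false [:: 22; 0; 14; 18; 19]))) (Lf false [:: 10; 0; 1; 4; 16]))) (Lf false [:: 12; 0; 1; 4; 18])))) (Nd 12 (Nd 1 (Lf true [:: 1; 5; 12; 23]) (Nd 13 (Nd 25 (Lf true [:: 5; 25; 12; 13]) (Nd 14 (Nd 6 (Lf true [:: 5; 6; 14; 23]) (Nd 15 (Nd 7 (Lf true [:: 5; 7; 14; 15]) (Lf false [:: 25; 4; 18; 6; 7])) (Lf false [:: 6; 4; 18; 15; 25])))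 (Nd 6 (Lf true [:: 5; 6; 23; 24]) (Lf false [:: 6; 4; 18; 14; 25])))) (Lf false [:: 13; 0; 1; 4; 18]))) (Lf false [:: 12; 0; 9; 18; 19])))) (Nd 12 (Nd 1 (Lf true [:: 1; 5; 12; 23]) (Nd 13 (Nd 25 (Lf true [:: 5; 25; 12; 13]) (Nd 9 (Nd 2 (Lf true [:: 2; 9; 23; 24]) (Nd 14 (Nd 6 (Lf true [:: 5; 6; 14; 23]) (Nd 15 (Nd 7 (Lf true [:: 5; 7; 14; 15]) (Lf false [:: 25; 4; 18; 6; 7])) (Lf false [:: 6; 4; 18; 15; 25]))) (Nd 6 (Lf true [:: 5; 6; 23; 24]) (Lf false [:: 6; 4; 18; 14; 25])))) (Nd 14 (Nd 6 (Lf true [:: 5; 6; 14; 23]) (Nd 15 (Nd 7 (Lf true [:: 5; 7; 14; 15]) (Lf false [:: 25; 4; 18; 6; 7])) (Lf false [:: 6; 4; 18; 15; 25]))) (Lf false [:: 14; 8; 9; 18; 19])))) (Lf false [:: 13; 0; 1; 4; 18]))) (Lf false [:: 12; 0; 8; 18; 19])))) (Nd 8 (Nd 2 (Lf true [:: 2; 8; 23; 24]) (Nd 9 (Nd 3 (Lf true [:: 3; 9; 23; 24]) (Nd 10 (Nd 14 (Lf true [:: 10; 14; 8; 9]) (Nd 11 (Nd 15 (Lf true [:: 8; 15; 10; 11]) (Nd 6 (Nd 17 (Lf true [:: 6; 17; 23; 24]) (Nd 7 (Nd 0 (Nd 16 (Lf true [:: 0; 16; 10; 11]) (Nd 1 (Nd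 20 (Lf true [:: 1; 20; 23; 24]) (Nd 21 (Lf true [:: 0; 21; 23; 24]) (Lf false [:: 17; 14; 15; 20; 21]))) (Nd 22 (Lf true [:: 0; 22; 10; 11]) (Lf false [:: 22; 1; 14; 18; 19])))) (Nd 22 (Nd 1 (Lf true [:: 1; 22; 10; 11]) (Nd 12 (Nd 16 (Lf true [:: 8; 16; 10; 12]) (Nd 13 (Nd 20 (Lf true [:: 8; 20; 23; 24]) (Nd 21 (Lf true [:: 8; 21; 23; 24]) (Lf false [:: 16; 0; 1; 20; 21]))) (Lf false [:: 13; 0; 1; 4; 16]))) (Lf false [:: 12; 0; 1; 4; 5]))) (Lf false [:: 22; 0; 14; 18; 19]))) (Lf false [:: 7; 4; 17; 14; 15]))) (Lf false [:: 6; 4; 5; 14; 15]))) (Lf false [:: 11; 2; 14; 4; 5]))) (Lf false [:: 10; 2; 3; 4; 5]))) (Nd 0 (Nd 20 (Lf true [:: 0; 20; 23; 24]) (Nd 1 (Nd 21 (Lf true [:: 1; 21; 23; 24]) (Nd 14 (Nd 15 (Nd 10 (Lf true [:: 8; 10; 14; 15]) (Nd 11 (Lf true [:: 8; 11; 14; 15]) (Lf false [:: 2; 4; 5; 10; 11]))) (Nd 12 (Nd 16 (Lf true [:: 12; 16; 0; 1]) (Lf false [:: 9; 15; 16; 20; 21])) (Lf false [:: 9; 12; 15; 18; 19]))) (Nd 12 (Nd 16 (Lf true [:: 12; 16; 0; 1]) (Lf false [:: 9; 14; 16; 20; 21])) (Lf false [:: 9; 12; 14; 18; 19])))) (Nd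 10 (Nd 3 (Lf true [:: 3; 8; 10; 23]) (Nd 11 (Nd 16 (Lf true [:: 0; 16; 10; 11]) (Nd 12 (Nd 14 (Lf true [:: 8; 14; 10; 11]) (Nd 13 (Nd 15 (Lf true [:: 8; 15; 10; 11]) (Lf false [:: 9; 14; 15; 18; 19])) (Lf false [:: 9; 13; 14; 18; 19]))) (Lf false [:: 12; 1; 9; 16; 18]))) (Lf false [:: 11; 1; 3; 4; 5]))) (Lf false [:: 10; 1; 2; 4; 5])))) (Nd 10 (Nd 3 (Lf true [:: 3; 8; 10; 23]) (Nd 11 (Nd 14 (Lf true [:: 8; 14; 10; 11]) (Nd 12 (Nd 16 (Lf true [:: 8; 16; 10; 12]) (Nd 13 (Nd 1 (Nd 20 (Lf true [:: 1; 20; 23; 24]) (Nd 15 (Lf true [:: 8; 15; 10; 11]) (Lf false [:: 9; 14; 15; 18; 20]))) (Nd 22 (Nd 15 (Lf true [:: 10; 15; 8; 22]) (Lf false [:: 9; 14; 15; 18; 19])) (Lf false [:: 22; 0; 1; 18; 19]))) (Lf false [:: 13; 0; 9; 16; 18]))) (Lf false [:: 9; 12; 14; 18; 19]))) (Lf false [:: 11; 0; 3; 4; 5]))) (Lf false [:: 10; 0; 2; 4; 5]))))) (Nd 9 (Nd 2 (Lf true [:: 2; 9; 23; 24]) (Nd 0 (Nd 20 (Lf true [:: 0; 20; 23; 24]) (Nd 1 (Nd 21 (Lf true [:: 1; 21; 23; 24]) (Nd 14 (Nd 15 (Nd 10 (Lf true [:: 9; 10; 14; 15]) (Nd 11 (Lf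 true [:: 9; 11; 14; 15]) (Lf false [:: 2; 4; 5; 10; 11]))) (Nd 12 (Nd 16 (Lf true [:: 12; 16; 0; 1]) (Lf false [:: 8; 15; 16; 20; 21])) (Lf false [:: 8; 12; 15; 18; 19]))) (Nd 12 (Nd 16 (Lf true [:: 12; 16; 0; 1]) (Lf false [:: 8; 14; 16; 20; 21])) (Lf false [:: 8; 12; 14; 18; 19])))) (Nd 10 (Nd 3 (Lf true [:: 3; 9; 10; 23]) (Nd 11 (Nd 16 (Lf true [:: 0; 16; 10; 11]) (Nd 12 (Nd 14 (Lf true [:: 9; 14; 10; 11]) (Nd 13 (Nd 15 (Lf true [:: 9; 15; 10; 11]) (Lf false [:: 8; 14; 15; 18; 19])) (Lf false [:: 8; 13; 14; 18; 19]))) (Lf false [:: 12; 1; 8; 16; 18]))) (Lf false [:: 11; 1; 3; 4; 5]))) (Lf false [:: 10; 1; 2; 4; 5])))) (Nd 10 (Nd 3 (Lf true [:: 3; 9; 10; 23]) (Nd 11 (Nd 14 (Lf true [:: 9; 14; 10; 11]) (Nd 12 (Nd 16 (Lf true [:: 9; 16; 10; 12]) (Nd 13 (Nd 1 (Nd 20 (Lf true [:: 1; 20; 23; 24]) (Nd 15 (Lf true [:: 9; 15; 10; 11]) (Lf false [:: 8; 14; 15; 18; 20]))) (Nd 22 (Nd 15 (Lf true [:: 10; 15; 9; 22]) (Lf false [:: 8; 14; 15; 18; 19])) (Lf false [:: 22; 0; 1; 18; 19]))) (Lf false [:: 13; 0; 8; 16; 18]))) (Lf false [:: 8; 12; 14;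 18; 19]))) (Lf false [:: 11; 0; 3; 4; 5]))) (Lf false [:: 10; 0; 2; 4; 5])))) (Nd 12 (Nd 0 (Nd 20 (Lf true [:: 0; 20; 23; 24]) (Nd 14 (Nd 1 (Nd 21 (Lf true [:: 1; 21; 23; 24]) (Nd 15 (Nd 10 (Nd 16 (Lf true [:: 0; 16; 10; 12]) (Lf false [:: 16; 8; 9; 20; 21])) (Nd 16 (Lf true [:: 12; 16; 0; 1]) (Lf false [:: 16; 8; 9; 10; 20]))) (Lf false [:: 15; 8; 9; 18; 21]))) (Nd 13 (Nd 16 (Lf true [:: 0; 16; 12; 13]) (Nd 10 (Nd 22 (Lf true [:: 10; 22; 0; 14]) (Nd 15 (Nd 11 (Nd 6 (Nd 17 (Lf true [:: 6; 17; 14; 15]) (Nd 21 (Lf true [:: 0; 21; 23; 24]) (Lf false [:: 16; 1; 17; 20; 21]))) (Nd 7 (Nd 17 (Lf true [:: 7; 17; 14; 15]) (Nd 21 (Lf true [:: 0; 21; 23; 24]) (Lf false [:: 16; 1; 17; 20; 21]))) (Nd 25 (Nd 21 (Lf true [:: 0; 21; 23; 24]) (Lf false [:: 16; 1; 8; 20; 21])) (Lf false [:: 25; 4; 5; 6; 7])))) (Lf false [:: 16; 1; 8; 11; 20])) (Lf false [:: 15; 8; 22; 18; 19]))) (Lf false [:: 16; 1; 8; 10; 20]))) (Lf false [:: 13; 1; 8; 18; 19]))) (Lf false [:: 14; 8; 9; 18; 20]))) (Nd 13 (Nd 1 (Nd 16 (Lf true [:: 1; 16; 12; 13]) (Nd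 14 (Nd 15 (Nd 10 (Nd 22 (Lf true [:: 10; 22; 1; 14]) (Nd 11 (Nd 6 (Nd 17 (Lf true [:: 6; 17; 14; 15]) (Nd 7 (Nd 20 (Lf true [:: 1; 20; 23; 24]) (Nd 21 (Lf true [:: 1; 21; 23; 24]) (Lf false [:: 16; 0; 8; 20; 21]))) (Nd 20 (Lf true [:: 1; 20; 23; 24]) (Nd 21 (Lf true [:: 1; 21; 23; 24]) (Lf false [:: 16; 0; 8; 20; 21]))))) (Nd 7 (Nd 17 (Lf true [:: 7; 17; 14; 15]) (Nd 20 (Lf true [:: 1; 20; 23; 24]) (Nd 21 (Lf true [:: 1; 21; 23; 24]) (Lf false [:: 16; 0; 8; 20; 21])))) (Nd 25 (Nd 20 (Lf true [:: 1; 20; 23; 24]) (Nd 21 (Lf true [:: 1; 21; 23; 24]) (Lf false [:: 16; 0; 8; 20; 21]))) (Lf false [:: 25; 4; 5; 6; 7])))) (Nd 2 (Nd 6 (Nd 17 (Lf true [:: 6; 17; 14; 15]) (Nd 7 (Nd 20 (Lf true [:: 1; 20; 23; 24]) (Lf false [:: 16; 0; 8; 11; 20])) (Nd 20 (Lf true [:: 1; 20; 23; 24]) (Lf false [:: 16; 0; 8; 11; 20])))) (Nd 7 (Nd 17 (Lf true [:: 7; 17; 14; 15]) (Nd 20 (Lf true [:: 1; 20; 23; 24]) (Lf false [:: 16; 0; 8; 11; 20]))) (Nd 25 (Nd 20 (Lf true [:: 1; 20; 23; 24]) (Lf false [:: 16; 0; 8; 11; 20])) (Lf false [:: 25; 4;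 5; 6; 7])))) (Lf false [:: 11; 0; 2; 4; 5])))) (Nd 11 (Nd 22 (Lf true [:: 11; 22; 1; 14]) (Nd 6 (Nd 17 (Lf true [:: 6; 17; 14; 15]) (Nd 7 (Nd 20 (Lf true [:: 1; 20; 23; 24]) (Lf false [:: 16; 0; 8; 10; 20])) (Nd 20 (Lf true [:: 1; 20; 23; 24]) (Lf false [:: 16; 0; 8; 10; 20])))) (Nd 7 (Nd 17 (Lf true [:: 7; 17; 14; 15]) (Nd 20 (Lf true [:: 1; 20; 23; 24]) (Lf false [:: 16; 0; 8; 10; 20]))) (Nd 25 (Nd 20 (Lf true [:: 1; 20; 23; 24]) (Lf false [:: 16; 0; 8; 10; 20])) (Lf false [:: 25; 4; 5; 6; 7]))))) (Lf false [:: 0; 4; 5; 10; 11]))) (Lf false [:: 15; 8; 9; 18; 19])) (Lf false [:: 14; 8; 9; 18; 19]))) (Nd 10 (Nd 14 (Nd 15 (Nd 22 (Lf true [:: 10; 22; 14; 15]) (Lf false [:: 22; 0; 1; 18; 19])) (Lf false [:: 15; 8; 9; 18; 19])) (Lf false [:: 14; 8; 9; 18; 19])) (Lf false [:: 10; 0; 1; 4; 5]))) (Lf false [:: 13; 0; 8; 18; 19]))) (Lf false [:: 12; 8; 9; 18; 19])))))))) (Nd 18 (Nd 19 (Nd 0 (Lf true [:: 0; 23; 18; 19]) (Nd 4 (Nd 1 (Lf true [:: 1; 23; 4; 18]) (Nd 5 (Nd 2 (Lf true [:: 2; 23; 4; 5]) (Nd 8 (Lf true [:: 8; 23; 18; 19])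 (Nd 9 (Lf true [:: 9; 23; 18; 19]) (Nd 10 (Nd 3 (Lf true [:: 3; 4; 10; 23]) (Lf false [:: 24; 2; 3; 8; 9])) (Lf false [:: 2; 8; 9; 10; 24]))))) (Nd 10 (Nd 2 (Lf true [:: 2; 4; 10; 23]) (Nd 11 (Nd 3 (Lf true [:: 3; 4; 10; 11]) (Nd 25 (Nd 6 (Lf true [:: 4; 6; 23; 25]) (Nd 8 (Lf true [:: 8; 23; 18; 19]) (Lf false [:: 24; 2; 3; 5; 8]))) (Lf false [:: 5; 2; 3; 24; 25]))) (Lf false [:: 5; 0; 2; 11; 24]))) (Lf false [:: 5; 0; 1; 10; 24])))) (Nd 5 (Nd 1 (Lf true [:: 1; 23; 5; 18]) (Nd 10 (Nd 2 (Lf true [:: 2; 5; 10; 23]) (Nd 11 (Nd 3 (Lf true [:: 3; 5; 10; 11]) (Nd 25 (Nd 6 (Lf true [:: 5; 6; 23; 25]) (Nd 8 (Lf true [:: 8; 23; 18; 19]) (Lf false [:: 24; 2; 3; 4; 8]))) (Lf false [:: 4; 2; 3; 24; 25]))) (Lf false [:: 4; 0; 2; 11; 24]))) (Lf false [:: 4; 0; 1; 10; 24]))) (Nd 10 (Nd 8 (Lf true [:: 8; 23; 18; 19]) (Nd 9 (Lf true [:: 9; 23; 18; 19]) (Nd 1 (Lf true [:: 1; 23; 18; 19]) (Lf false [:: 24; 0; 1; 4; 5])))) (Lf false [:: 0; 4; 5; 10; 24]))))) (Nd 4 (Nd 0 (Lf true [:: 0; 23; 4; 18]) (Nd 5 (Nd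 1 (Lf true [:: 1; 23; 4; 5]) (Nd 12 (Nd 8 (Lf true [:: 8; 18; 12; 23]) (Nd 13 (Nd 25 (Lf true [:: 4; 25; 12; 13]) (Nd 9 (Lf true [:: 9; 18; 12; 13]) (Nd 14 (Nd 6 (Lf true [:: 4; 6; 14; 23]) (Nd 17 (Nd 7 (Lf true [:: 7; 14; 4; 17]) (Lf false [:: 19; 6; 7; 24; 25])) (Lf false [:: 6; 17; 19; 24; 25]))) (Lf false [:: 19; 8; 9; 14; 24])))) (Lf false [:: 19; 0; 8; 13; 24]))) (Lf false [:: 19; 0; 1; 12; 24]))) (Nd 12 (Nd 1 (Lf true [:: 1; 4; 12; 23]) (Lf false [:: 24; 0; 1; 5; 19])) (Lf false [:: 0; 5; 19; 12; 24])))) (Nd 5 (Nd 0 (Lf true [:: 0; 23; 5; 18]) (Nd 12 (Nd 1 (Lf true [:: 1; 5; 12; 23]) (Lf false [:: 24; 0; 1; 4; 19])) (Lf false [:: 0; 4; 19; 12; 24]))) (Nd 8 (Nd 12 (Lf true [:: 8; 18; 12; 23]) (Nd 0 (Lf true [:: 18; 23; 0; 8]) (Lf false [:: 0; 4; 5; 12; 24]))) (Nd 9 (Nd 12 (Lf true [:: 9; 18; 12; 23]) (Nd 0 (Lf true [:: 18; 23; 0; 9]) (Lf false [:: 0; 4; 5; 12; 24]))) (Nd 12 (Nd 0 (Lf true [:: 0; 18; 12; 23]) (Nd 10 (Nd 1 (Lf true [:: 1; 18; 12; 23]) (Lf false [:: 24; 0; 1; 4; 5])) (Lf false [:: 0;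 4; 5; 10; 24]))) (Lf false [:: 19; 8; 9; 12; 24]))))))) (Nd 19 (Nd 4 (Nd 0 (Lf true [:: 0; 23; 4; 19]) (Nd 5 (Nd 1 (Lf true [:: 1; 23; 4; 5]) (Nd 12 (Nd 8 (Lf true [:: 8; 19; 12; 23]) (Nd 13 (Nd 25 (Lf true [:: 4; 25; 12; 13]) (Nd 9 (Lf true [:: 9; 19; 12; 13]) (Nd 14 (Nd 6 (Lf true [:: 4; 6; 14; 23]) (Nd 17 (Nd 7 (Lf true [:: 7; 14; 4; 17]) (Lf false [:: 18; 6; 7; 24; 25])) (Lf false [:: 6; 17; 18; 24; 25]))) (Lf false [:: 18; 8; 9; 14; 24])))) (Lf false [:: 18; 0; 8; 13; 24]))) (Lf false [:: 18; 0; 1; 12; 24]))) (Nd 12 (Nd 1 (Lf true [:: 1; 4; 12; 23]) (Lf false [:: 24; 0; 1; 5; 18])) (Lf false [:: 0; 5; 18; 12; 24])))) (Nd 5 (Nd 0 (Lf true [:: 0; 23; 5; 19]) (Nd 12 (Nd 1 (Lf true [:: 1; 5; 12; 23]) (Lf false [:: 24; 0; 1; 4; 18])) (Lf false [:: 0; 4; 18; 12; 24]))) (Nd 8 (Nd 12 (Lf true [:: 8; 19; 12; 23]) (Nd 0 (Lf true [:: 19; 23; 0; 8]) (Lf false [:: 0; 4; 5; 12; 24]))) (Nd 9 (Nd 12 (Lf true [:: 9; 19; 12; 23]) (Nd 0 (Lf true [:: 19; 23; 0; 9]) (Lf false [:: 0; 4; 5; 12; 24]))) (Nd 12 (Nd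 0 (Lf true [:: 0; 19; 12; 23]) (Nd 10 (Nd 1 (Lf true [:: 1; 19; 12; 23]) (Lf false [:: 24; 0; 1; 4; 5])) (Lf false [:: 0; 4; 5; 10; 24]))) (Lf false [:: 18; 8; 9; 12; 24])))))) (Nd 4 (Nd 5 (Nd 0 (Lf true [:: 0; 23; 4; 5]) (Nd 12 (Nd 1 (Lf true [:: 1; 4; 12; 23]) (Lf false [:: 24; 0; 1; 18; 19])) (Lf false [:: 0; 12; 24; 18; 19]))) (Nd 8 (Nd 2 (Lf true [:: 2; 23; 4; 8]) (Nd 9 (Nd 3 (Lf true [:: 3; 23; 4; 9]) (Nd 10 (Nd 0 (Lf true [:: 0; 4; 10; 23]) (Nd 12 (Nd 1 (Lf true [:: 1; 4; 10; 12]) (Lf false [:: 24; 0; 1; 5; 18])) (Lf false [:: 0; 5; 18; 12; 24]))) (Lf false [:: 5; 2; 3; 10; 24]))) (Nd 10 (Nd 0 (Lf true [:: 0; 4; 10; 23]) (Lf false [:: 24; 0; 9; 18; 19])) (Lf false [:: 2; 5; 9; 10; 24])))) (Nd 12 (Nd 0 (Lf true [:: 0; 4; 12; 23]) (Lf false [:: 24; 0; 8; 18; 19])) (Lf false [:: 8; 12; 24; 18; 19])))) (Nd 5 (Nd 8 (Nd 2 (Lf true [:: 2; 23; 5; 8]) (Nd 9 (Nd 3 (Lf true [:: 3; 23; 5; 9]) (Nd 10 (Nd 0 (Lf true [:: 0; 5; 10; 23]) (Nd 12 (Nd 1 (Lf true [:: 1; 5; 10; 12]) (Lf false [:: 24;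 0; 1; 4; 18])) (Lf false [:: 0; 4; 18; 12; 24]))) (Lf false [:: 4; 2; 3; 10; 24]))) (Nd 10 (Nd 0 (Lf true [:: 0; 5; 10; 23]) (Lf false [:: 24; 0; 9; 18; 19])) (Lf false [:: 2; 4; 9; 10; 24])))) (Nd 12 (Nd 0 (Lf true [:: 0; 5; 12; 23]) (Lf false [:: 24; 0; 8; 18; 19])) (Lf false [:: 8; 12; 24; 18; 19]))) (Nd 8 (Nd 9 (Nd 2 (Lf true [:: 2; 23; 8; 9]) (Nd 10 (Nd 3 (Lf true [:: 3; 8; 10; 23]) (Lf false [:: 24; 2; 3; 4; 5])) (Lf false [:: 2; 4; 5; 10; 24]))) (Nd 12 (Nd 0 (Nd 16 (Lf true [:: 12; 16; 0; 8]) (Nd 1 (Nd 20 (Lf true [:: 20; 23; 0; 1]) (Nd 14 (Nd 21 (Lf true [:: 8; 21; 14; 23]) (Lf false [:: 9; 16; 24; 20; 21])) (Lf false [:: 9; 14; 24; 18; 20]))) (Lf false [:: 24; 1; 9; 18; 19]))) (Lf false [:: 24; 0; 9; 18; 19])) (Lf false [:: 9; 12; 24; 18; 19]))) (Nd 12 (Nd 9 (Nd 0 (Nd 16 (Lf true [:: 12; 16; 0; 9]) (Nd 1 (Nd 20 (Lf true [:: 20; 23; 0; 1]) (Nd 14 (Nd 21 (Lf true [:: 9; 21; 14; 23]) (Lf false [:: 8; 16; 24; 20; 21])) (Lf false [:: 8; 14; 24; 18; 20]))) (Lf false [:: 24; 1; 8; 18; 19]))) (Lf false [:: 24; 0; 8;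 18; 19])) (Lf false [:: 24; 8; 9; 18; 19])) (Lf false [:: 8; 12; 24; 18; 19])))))))) (Nd 24 (Nd 18 (Nd 19 (Nd 0 (Lf true [:: 0; 24; 18; 19]) (Nd 4 (Nd 1 (Lf true [:: 1; 24; 4; 18]) (Nd 5 (Nd 2 (Lf true [:: 2; 24; 4; 5]) (Nd 8 (Lf true [:: 8; 24; 18; 19]) (Nd 9 (Lf true [:: 9; 24; 18; 19]) (Nd 10 (Nd 3 (Lf true [:: 3; 4; 10; 24]) (Lf false [:: 23; 2; 3; 8; 9])) (Lf false [:: 2; 8; 9; 10; 23]))))) (Nd 10 (Nd 2 (Lf true [:: 2; 4; 10; 24]) (Nd 11 (Nd 3 (Lf true [:: 3; 4; 10; 11]) (Nd 25 (Nd 6 (Lf true [:: 4; 6; 24; 25]) (Nd 8 (Lf true [:: 8; 24; 18; 19]) (Lf false [:: 23; 2; 3; 5; 8]))) (Lf false [:: 5; 2; 3; 23; 25]))) (Lf false [:: 5; 0; 2; 11; 23]))) (Lf false [:: 5; 0; 1; 10; 23])))) (Nd 5 (Nd 1 (Lf true [:: 1; 24; 5; 18]) (Nd 10 (Nd 2 (Lf true [:: 2; 5; 10; 24]) (Nd 11 (Nd 3 (Lf true [:: 3; 5; 10; 11]) (Nd 25 (Nd 6 (Lf true [:: 5; 6; 24; 25]) (Nd 8 (Lf true [:: 8; 24; 18; 19]) (Lf false [:: 23; 2; 3; 4; 8]))) (Lf false [:: 4; 2; 3; 23; 25]))) (Lf false [:: 4; 0; 2; 11; 23]))) (Lf false [::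 4; 0; 1; 10; 23]))) (Nd 10 (Nd 8 (Lf true [:: 8; 24; 18; 19]) (Nd 9 (Lf true [:: 9; 24; 18; 19]) (Nd 1 (Lf true [:: 1; 24; 18; 19]) (Lf false [:: 23; 0; 1; 4; 5])))) (Lf false [:: 0; 4; 5; 10; 23]))))) (Nd 4 (Nd 0 (Lf true [:: 0; 24; 4; 18]) (Nd 5 (Nd 1 (Lf true [:: 1; 24; 4; 5]) (Nd 12 (Nd 8 (Lf true [:: 8; 18; 12; 24]) (Nd 13 (Nd 25 (Lf true [:: 4; 25; 12; 13]) (Nd 9 (Lf true [:: 9; 18; 12; 13]) (Nd 14 (Nd 6 (Lf true [:: 4; 6; 14; 24]) (Nd 17 (Nd 7 (Lf true [:: 7; 14; 4; 17]) (Lf false [:: 19; 6; 7; 23; 25])) (Lf false [:: 6; 17; 19; 23; 25]))) (Lf false [:: 19; 8; 9; 14; 23])))) (Lf false [:: 19; 0; 8; 13; 23]))) (Lf false [:: 19; 0; 1; 12; 23]))) (Nd 12 (Nd 1 (Lf true [:: 1; 4; 12; 24]) (Lf false [:: 23; 0; 1; 5; 19])) (Lf false [:: 0; 5; 19; 12; 23])))) (Nd 5 (Nd 0 (Lf true [:: 0; 24; 5; 18]) (Nd 12 (Nd 1 (Lf true [:: 1; 5; 12; 24]) (Lf false [:: 23; 0; 1; 4; 19])) (Lf false [:: 0; 4; 19; 12; 23]))) (Nd 8 (Nd 12 (Lf true [:: 8; 18; 12; 24]) (Nd 0 (Lf true [:: 18; 24; 0; 8]) (Lf false [:: 0; 4;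 5; 12; 23]))) (Nd 9 (Nd 12 (Lf true [:: 9; 18; 12; 24]) (Nd 0 (Lf true [:: 18; 24; 0; 9]) (Lf false [:: 0; 4; 5; 12; 23]))) (Nd 12 (Nd 0 (Lf true [:: 0; 18; 12; 24]) (Nd 10 (Nd 1 (Lf true [:: 1; 18; 12; 24]) (Lf false [:: 23; 0; 1; 4; 5])) (Lf false [:: 0; 4; 5; 10; 23]))) (Lf false [:: 19; 8; 9; 12; 23]))))))) (Nd 19 (Nd 4 (Nd 0 (Lf true [:: 0; 24; 4; 19]) (Nd 5 (Nd 1 (Lf true [:: 1; 24; 4; 5]) (Nd 12 (Nd 8 (Lf true [:: 8; 19; 12; 24]) (Nd 13 (Nd 25 (Lf true [:: 4; 25; 12; 13]) (Nd 9 (Lf true [:: 9; 19; 12; 13]) (Nd 14 (Nd 6 (Lf true [:: 4; 6; 14; 24]) (Nd 17 (Nd 7 (Lf true [:: 7; 14; 4; 17]) (Lf false [:: 18; 6; 7; 23; 25])) (Lf false [:: 6; 17; 18; 23; 25]))) (Lf false [:: 18; 8; 9; 14; 23])))) (Lf false [:: 18; 0; 8; 13; 23]))) (Lf false [:: 18; 0; 1; 12; 23]))) (Nd 12 (Nd 1 (Lf true [:: 1; 4; 12; 24]) (Lf false [:: 23; 0; 1; 5; 18])) (Lf false [:: 0; 5; 18; 12; 23])))) (Nd 5 (Nd 0 (Lf true [:: 0; 24; 5; 19]) (Nd 12 (Nd 1 (Lf true [:: 1; 5; 12; 24]) (Lf false [:: 23; 0; 1; 4; 18])) (Lf false [:: 0;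 4; 18; 12; 23]))) (Nd 8 (Nd 12 (Lf true [:: 8; 19; 12; 24]) (Nd 0 (Lf true [:: 19; 24; 0; 8]) (Lf false [:: 0; 4; 5; 12; 23]))) (Nd 9 (Nd 12 (Lf true [:: 9; 19; 12; 24]) (Nd 0 (Lf true [:: 19; 24; 0; 9]) (Lf false [:: 0; 4; 5; 12; 23]))) (Nd 12 (Nd 0 (Lf true [:: 0; 19; 12; 24]) (Nd 10 (Nd 1 (Lf true [:: 1; 19; 12; 24]) (Lf false [:: 23; 0; 1; 4; 5])) (Lf false [:: 0; 4; 5; 10; 23]))) (Lf false [:: 18; 8; 9; 12; 23])))))) (Nd 4 (Nd 5 (Nd 0 (Lf true [:: 0; 24; 4; 5]) (Nd 12 (Nd 1 (Lf true [:: 1; 4; 12; 24]) (Lf false [:: 23; 0; 1; 18; 19])) (Lf false [:: 0; 12; 23; 18; 19]))) (Nd 8 (Nd 2 (Lf true [:: 2; 24; 4; 8]) (Nd 9 (Nd 3 (Lf true [:: 3; 24; 4; 9]) (Nd 10 (Nd 0 (Lf true [:: 0; 4; 10; 24]) (Nd 12 (Nd 1 (Lf true [:: 1; 4; 10; 12]) (Lf false [:: 23; 0; 1; 5; 18])) (Lf false [:: 0; 5; 18; 12; 23]))) (Lf false [:: 5; 2; 3; 10; 23]))) (Nd 10 (Nd 0 (Lf true [:: 0; 4; 10; 24]) (Lf false [:: 23; 0; 9; 18; 19])) (Lf false [:: 2; 5; 9; 10; 23])))) (Nd 12 (Nd 0 (Lf true [:: 0; 4; 12; 24]) (Lf false [::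 23; 0; 8; 18; 19])) (Lf false [:: 8; 12; 23; 18; 19])))) (Nd 5 (Nd 8 (Nd 2 (Lf true [:: 2; 24; 5; 8]) (Nd 9 (Nd 3 (Lf true [:: 3; 24; 5; 9]) (Nd 10 (Nd 0 (Lf true [:: 0; 5; 10; 24]) (Nd 12 (Nd 1 (Lf true [:: 1; 5; 10; 12]) (Lf false [:: 23; 0; 1; 4; 18])) (Lf false [:: 0; 4; 18; 12; 23]))) (Lf false [:: 4; 2; 3; 10; 23]))) (Nd 10 (Nd 0 (Lf true [:: 0; 5; 10; 24]) (Lf false [:: 23; 0; 9; 18; 19])) (Lf false [:: 2; 4; 9; 10; 23])))) (Nd 12 (Nd 0 (Lf true [:: 0; 5; 12; 24]) (Lf false [:: 23; 0; 8; 18; 19])) (Lf false [:: 8; 12; 23; 18; 19]))) (Nd 8 (Nd 9 (Nd 2 (Lf true [:: 2; 24; 8; 9]) (Nd 10 (Nd 3 (Lf true [:: 3; 8; 10; 24]) (Lf false [:: 23; 2; 3; 4; 5])) (Lf false [:: 2; 4; 5; 10; 23]))) (Nd 12 (Nd 0 (Nd 16 (Lf true [:: 12; 16; 0; 8]) (Nd 1 (Nd 20 (Lf true [:: 20; 24; 0; 1]) (Nd 14 (Nd 21 (Lf true [:: 8; 21; 14; 24]) (Lf false [:: 9; 16; 23; 20; 21])) (Lf false [:: 9; 14; 23; 18; 20]))) (Lf false [:: 23; 1; 9; 18; 19]))) (Lf false [:: 23; 0; 9; 18; 19])) (Lf false [:: 9; 12; 23; 18; 19]))) (Nd 12 (Nd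 9 (Nd 0 (Nd 16 (Lf true [:: 12; 16; 0; 9]) (Nd 1 (Nd 20 (Lf true [:: 20; 24; 0; 1]) (Nd 14 (Nd 21 (Lf true [:: 9; 21; 14; 24]) (Lf false [:: 8; 16; 23; 20; 21])) (Lf false [:: 8; 14; 23; 18; 20]))) (Lf false [:: 23; 1; 8; 18; 19]))) (Lf false [:: 23; 0; 8; 18; 19])) (Lf false [:: 23; 8; 9; 18; 19])) (Lf false [:: 8; 12; 23; 18; 19]))))))) (Nd 18 (Nd 19 (Nd 4 (Nd 5 (Nd 8 (Nd 12 (Lf true [:: 8; 12; 18; 19]) (Nd 9 (Nd 13 (Lf true [:: 9; 13; 18; 19]) (Nd 0 (Nd 10 (Lf true [:: 0; 10; 4; 5]) (Nd 1 (Nd 11 (Lf true [:: 1; 11; 4; 5]) (Nd 14 (Lf true [:: 8; 14; 18; 19]) (Nd 15 (Lf true [:: 8; 15; 18; 19]) (Nd 22 (Lf true [:: 0; 22; 18; 19]) (Lf false [:: 22; 10; 11; 14; 15]))))) (Nd 14 (Lf true [:: 8; 14; 18; 19]) (Nd 15 (Lf true [:: 8; 15; 18; 19]) (Nd 11 (Lf true [:: 0; 11; 4; 5]) (Nd 22 (Lf true [:: 0; 22; 18; 19]) (Lf false [:: 22; 1; 14; 10; 11]))))))) (Nd 1 (Nd 10 (Lf true [:: 1; 10; 4; 5]) (Nd 14 (Lf true [:: 8; 14; 18; 19]) (Nd 15 (Lf true [:: 8; 15; 18; 19]) (Nd 11 (Lf true [:: 1; 11; 4; 5]) (Nd 22 (Lf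 true [:: 1; 22; 18; 19]) (Lf false [:: 22; 0; 14; 10; 11])))))) (Nd 16 (Nd 10 (Lf true [:: 10; 16; 8; 9]) (Nd 14 (Lf true [:: 8; 14; 18; 19]) (Nd 15 (Lf true [:: 8; 15; 18; 19]) (Nd 11 (Lf true [:: 11; 16; 8; 9]) (Nd 22 (Nd 6 (Nd 25 (Lf true [:: 6; 25; 4; 5]) (Nd 7 (Nd 17 (Lf true [:: 16; 17; 6; 7]) (Nd 20 (Lf true [:: 16; 20; 8; 9]) (Lf false [:: 20; 0; 17; 23; 24]))) (Nd 20 (Lf true [:: 16; 20; 8; 9]) (Lf false [:: 20; 0; 1; 23; 24])))) (Nd 7 (Nd 25 (Lf true [:: 7; 25; 4; 5]) (Nd 20 (Lf true [:: 16; 20; 8; 9]) (Lf false [:: 20; 0; 1; 23; 24]))) (Nd 17 (Nd 20 (Lf true [:: 16; 20; 8; 17]) (Lf false [:: 20; 0; 1; 23; 24])) (Lf false [:: 17; 6; 7; 14; 15])))) (Lf false [:: 22; 0; 1; 10; 11])))))) (Lf false [:: 16; 0; 1; 12; 13]))))) (Nd 0 (Nd 10 (Lf true [:: 0; 10; 4; 5]) (Nd 1 (Nd 11 (Lf true [:: 1; 11; 4; 5]) (Nd 14 (Lf true [:: 8; 14; 18; 19]) (Nd 2 (Nd 25 (Lf true [:: 2; 25; 4; 5]) (Nd 15 (Lf true [:: 8; 15; 18; 19]) (Lf false [:: 9; 10; 11; 14; 15]))) (Lf false [:: 9; 2; 14; 10; 11])))) (Nd 16 (Nd 11 (Lf true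 [:: 0; 11; 4; 16]) (Nd 14 (Lf true [:: 8; 14; 18; 19]) (Nd 2 (Nd 25 (Lf true [:: 2; 25; 4; 5]) (Nd 15 (Lf true [:: 8; 15; 18; 19]) (Lf false [:: 9; 10; 11; 14; 15]))) (Lf false [:: 9; 2; 14; 10; 11])))) (Lf false [:: 16; 1; 9; 10; 12])))) (Nd 20 (Nd 14 (Lf true [:: 8; 14; 18; 20]) (Nd 1 (Nd 10 (Lf true [:: 1; 10; 4; 5]) (Nd 16 (Lf true [:: 16; 20; 1; 8]) (Lf false [:: 16; 0; 9; 10; 12]))) (Nd 21 (Nd 15 (Lf true [:: 8; 15; 18; 21]) (Nd 10 (Nd 2 (Lf true [:: 2; 10; 4; 5]) (Nd 3 (Lf true [:: 3; 10; 4; 5]) (Lf false [:: 9; 2; 3; 23; 24]))) (Nd 11 (Nd 2 (Lf true [:: 2; 11; 4; 5]) (Nd 3 (Lf true [:: 3; 11; 4; 5]) (Lf false [:: 9; 2; 3; 10; 23]))) (Lf false [:: 9; 10; 11; 14; 15])))) (Lf false [:: 21; 0; 1; 23; 24])))) (Lf false [:: 20; 0; 9; 23; 24]))))) (Nd 9 (Nd 12 (Lf true [:: 9; 12; 18; 19]) (Nd 0 (Nd 10 (Lf true [:: 0; 10; 4; 5]) (Nd 1 (Nd 11 (Lf true [:: 1; 11; 4; 5]) (Nd 14 (Lf true [:: 9; 14; 18; 19]) (Nd 2 (Nd 25 (Lf true [:: 2; 25; 4; 5]) (Nd 15 (Lf true [:: 9; 15; 18; 19]) (Lf false [:: 8;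 10; 11; 14; 15]))) (Lf false [:: 8; 2; 14; 10; 11])))) (Nd 16 (Nd 11 (Lf true [:: 0; 11; 4; 16]) (Nd 14 (Lf true [:: 9; 14; 18; 19]) (Nd 2 (Nd 25 (Lf true [:: 2; 25; 4; 5]) (Nd 15 (Lf true [:: 9; 15; 18; 19]) (Lf false [:: 8; 10; 11; 14; 15]))) (Lf false [:: 8; 2; 14; 10; 11])))) (Lf false [:: 16; 1; 8; 10; 12])))) (Nd 20 (Nd 14 (Lf true [:: 9; 14; 18; 20]) (Nd 1 (Nd 10 (Lf true [:: 1; 10; 4; 5]) (Nd 16 (Lf true [:: 16; 20; 1; 9]) (Lf false [:: 16; 0; 8; 10; 12]))) (Nd 21 (Nd 15 (Lf true [:: 9; 15; 18; 21]) (Nd 10 (Nd 2 (Lf true [:: 2; 10; 4; 5]) (Nd 3 (Lf true [:: 3; 10; 4; 5]) (Lf false [:: 8; 2; 3; 23; 24]))) (Nd 11 (Nd 2 (Lf true [:: 2; 11; 4; 5]) (Nd 3 (Lf true [:: 3; 11; 4; 5]) (Lf false [:: 8; 2; 3; 10; 23]))) (Lf false [:: 8; 10; 11; 14; 15])))) (Lf false [:: 21; 0; 1; 23; 24])))) (Lf false [:: 20; 0; 8; 23; 24])))) (Nd 2 (Nd 10 (Lf true [:: 2; 10; 4; 5]) (Nd 3 (Nd 11 (Lf true [:: 3; 11; 4; 5]) (Nd 14 (Nd 6 (Lf true [:: 6; 14; 4; 5]) (Nd 0 (Nd 12 (Lf true [:: 0; 12; 4; 5]) (Nd 16 (Nd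 13 (Lf true [:: 0; 13; 4; 16]) (Nd 1 (Nd 22 (Lf true [:: 1; 22; 18; 19]) (Nd 15 (Nd 7 (Lf true [:: 4; 7; 14; 15]) (Nd 17 (Nd 20 (Lf true [:: 16; 20; 0; 17]) (Lf false [:: 20; 8; 9; 23; 24])) (Lf false [:: 17; 6; 7; 23; 24]))) (Lf false [:: 15; 8; 22; 10; 11]))) (Nd 20 (Nd 21 (Lf true [:: 0; 16; 20; 21]) (Lf false [:: 21; 1; 8; 23; 24])) (Lf false [:: 20; 1; 8; 23; 24])))) (Lf false [:: 16; 8; 9; 10; 12]))) (Nd 16 (Nd 1 (Nd 12 (Lf true [:: 1; 12; 4; 5]) (Nd 15 (Nd 7 (Lf true [:: 4; 7; 14; 15]) (Nd 17 (Nd 20 (Lf true [:: 16; 20; 1; 17]) (Lf false [:: 20; 0; 8; 23; 24])) (Lf false [:: 17; 6; 7; 23; 24]))) (Lf false [:: 15; 8; 9; 10; 11]))) (Nd 20 (Nd 17 (Lf true [:: 17; 20; 14; 16]) (Nd 7 (Lf true [:: 7; 14; 4; 5]) (Lf false [:: 17; 6; 7; 23; 24]))) (Lf false [:: 20; 0; 1; 23; 24]))) (Lf false [:: 16; 0; 8; 10; 11])))) (Lf false [:: 14; 8; 9; 10; 11]))) (Lf false [:: 3; 8; 9; 10; 23]))) (Lf false [:: 2; 8; 9; 23; 24])))) (Nd 8 (Nd 12 (Lf true [:: 8; 12; 18; 19]) (Nd 9 (Nd 13 (Lf true [:: 9; 13; 18; 19]) (Nd 0 (Nd 22 (Lf true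 [:: 0; 22; 18; 19]) (Nd 1 (Nd 10 (Lf true [:: 4; 10; 0; 1]) (Nd 14 (Lf true [:: 8; 14; 18; 19]) (Nd 15 (Lf true [:: 8; 15; 18; 19]) (Lf false [:: 10; 5; 22; 14; 15])))) (Nd 16 (Nd 10 (Lf true [:: 0; 10; 4; 16]) (Nd 11 (Lf true [:: 0; 11; 4; 16]) (Lf false [:: 1; 5; 22; 10; 11]))) (Lf false [:: 1; 5; 16; 12; 13])))) (Nd 16 (Nd 10 (Lf true [:: 10; 16; 8; 9]) (Nd 1 (Nd 11 (Lf true [:: 1; 11; 4; 16]) (Nd 22 (Lf true [:: 1; 22; 18; 19]) (Lf false [:: 0; 5; 22; 10; 11]))) (Lf false [:: 5; 0; 1; 10; 12]))) (Lf false [:: 0; 5; 16; 12; 13])))) (Nd 2 (Nd 10 (Lf true [:: 2; 10; 4; 8]) (Nd 3 (Nd 11 (Lf true [:: 3; 11; 4; 8]) (Nd 14 (Lf true [:: 8; 14; 18; 19]) (Lf false [:: 14; 5; 9; 10; 11]))) (Lf false [:: 3; 5; 9; 10; 23]))) (Lf false [:: 2; 5; 9; 23; 24])))) (Nd 2 (Nd 9 (Nd 10 (Lf true [:: 2; 10; 4; 9]) (Nd 3 (Nd 11 (Lf true [:: 3; 11; 4; 9]) (Nd 14 (Lf true [:: 9; 14; 18; 19]) (Lf false [:: 14; 5; 8; 10; 11]))) (Lf false [:: 3; 5; 8; 10; 23]))) (Nd 3 (Nd 10 (Lf true [:: 4; 10; 2; 3]) (Nd 0 (Nd 12 (Lf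 true [:: 0; 12; 4; 18]) (Nd 16 (Nd 11 (Lf true [:: 0; 11; 4; 16]) (Nd 14 (Nd 6 (Lf true [:: 6; 14; 4; 18]) (Nd 1 (Nd 13 (Lf true [:: 1; 13; 4; 16]) (Nd 15 (Nd 7 (Lf true [:: 4; 7; 14; 15]) (Lf false [:: 5; 6; 7; 23; 24])) (Lf false [:: 15; 5; 8; 10; 11]))) (Lf false [:: 5; 1; 6; 23; 24]))) (Lf false [:: 14; 5; 8; 10; 11]))) (Lf false [:: 16; 8; 9; 10; 12]))) (Nd 20 (Nd 1 (Nd 12 (Lf true [:: 1; 12; 4; 18]) (Nd 16 (Nd 11 (Lf true [:: 1; 11; 4; 16]) (Nd 22 (Lf true [:: 1; 22; 18; 19]) (Lf false [:: 0; 5; 22; 10; 11]))) (Lf false [:: 0; 5; 16; 10; 12]))) (Lf false [:: 5; 0; 1; 10; 23])) (Lf false [:: 0; 5; 20; 23; 24])))) (Lf false [:: 3; 5; 9; 23; 24]))) (Lf false [:: 2; 5; 8; 23; 24])))) (Nd 5 (Nd 8 (Nd 12 (Lf true [:: 8; 12; 18; 19]) (Nd 9 (Nd 13 (Lf true [:: 9; 13; 18; 19]) (Nd 0 (Nd 22 (Lf true [:: 0; 22; 18; 19]) (Nd 1 (Nd 10 (Lf true [:: 5; 10; 0; 1]) (Nd 14 (Lf true [:: 8; 14; 18; 19]) (Nd 15 (Lf true [:: 8; 15; 18; 19]) (Lf false [:: 10; 4; 22; 14; 15])))) (Nd 16 (Nd 10 (Lf true [:: 0; 10; 5; 16]) (Nd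 11 (Lf true [:: 0; 11; 5; 16]) (Lf false [:: 1; 4; 22; 10; 11]))) (Lf false [:: 1; 4; 16; 12; 13])))) (Nd 16 (Nd 10 (Lf true [:: 10; 16; 8; 9]) (Nd 1 (Nd 11 (Lf true [:: 1; 11; 5; 16]) (Nd 22 (Lf true [:: 1; 22; 18; 19]) (Lf false [:: 0; 4; 22; 10; 11]))) (Lf false [:: 4; 0; 1; 10; 12]))) (Lf false [:: 0; 4; 16; 12; 13])))) (Nd 2 (Nd 10 (Lf true [:: 2; 10; 5; 8]) (Nd 3 (Nd 11 (Lf true [:: 3; 11; 5; 8]) (Nd 14 (Lf true [:: 8; 14; 18; 19]) (Lf false [:: 14; 4; 9; 10; 11]))) (Lf false [:: 3; 4; 9; 10; 23]))) (Lf false [:: 2; 4; 9; 23; 24])))) (Nd 2 (Nd 9 (Nd 10 (Lf true [:: 2; 10; 5; 9]) (Nd 3 (Nd 11 (Lf true [:: 3; 11; 5; 9]) (Nd 14 (Lf true [:: 9; 14; 18; 19]) (Lf false [:: 14; 4; 8; 10; 11]))) (Lf false [:: 3; 4; 8; 10; 23]))) (Nd 3 (Nd 10 (Lf true [:: 5; 10; 2; 3]) (Nd 0 (Nd 12 (Lf true [:: 0; 12; 5; 18]) (Nd 16 (Nd 11 (Lf true [:: 0; 11; 5; 16]) (Nd 14 (Nd 6 (Lf true [:: 6; 14; 5; 18]) (Nd 1 (Nd 13 (Lf true [:: 1; 13; 5; 16]) (Nd 15 (Nd 7 (Lf true [:: 5; 7; 14; 15]) (Lf false [:: 4; 6; 7;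 23; 24])) (Lf false [:: 15; 4; 8; 10; 11]))) (Lf false [:: 4; 1; 6; 23; 24]))) (Lf false [:: 14; 4; 8; 10; 11]))) (Lf false [:: 16; 8; 9; 10; 12]))) (Nd 20 (Nd 1 (Nd 12 (Lf true [:: 1; 12; 5; 18]) (Nd 16 (Nd 11 (Lf true [:: 1; 11; 5; 16]) (Nd 22 (Lf true [:: 1; 22; 18; 19]) (Lf false [:: 0; 4; 22; 10; 11]))) (Lf false [:: 0; 4; 16; 10; 12]))) (Lf false [:: 4; 0; 1; 10; 23])) (Lf false [:: 0; 4; 20; 23; 24])))) (Lf false [:: 3; 4; 9; 23; 24]))) (Lf false [:: 2; 4; 8; 23; 24]))) (Nd 0 (Nd 12 (Lf true [:: 0; 12; 18; 19]) (Nd 1 (Nd 13 (Lf true [:: 1; 13; 18; 19]) (Nd 25 (Nd 6 (Lf true [:: 6; 25; 18; 19]) (Lf false [:: 6; 4; 5; 23; 24])) (Lf false [:: 25; 4; 5; 12; 13]))) (Lf false [:: 1; 4; 5; 12; 23]))) (Lf false [:: 0; 4; 5; 23; 24])))) (Nd 4 (Nd 5 (Nd 8 (Nd 9 (Nd 12 (Lf true [:: 12; 18; 8; 9]) (Nd 0 (Nd 10 (Lf true [:: 0; 10; 4; 5]) (Nd 1 (Nd 11 (Lf true [:: 1; 11; 4; 5]) (Nd 14 (Lf true [:: 14; 18; 8; 9]) (Nd 15 (Lf true [:: 15; 18; 8; 9]) (Nd 22 (Lf true [:: 18; 22; 0; 1]) (Lf false [:: 22; 10; 11; 14; 15])))))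 (Nd 20 (Nd 14 (Lf true [:: 8; 14; 18; 20]) (Nd 22 (Nd 11 (Lf true [:: 0; 11; 4; 22]) (Nd 15 (Lf true [:: 8; 15; 18; 20]) (Nd 6 (Nd 25 (Lf true [:: 6; 25; 4; 5]) (Nd 13 (Lf true [:: 0; 13; 4; 5]) (Lf false [:: 19; 1; 25; 12; 13]))) (Lf false [:: 19; 1; 6; 23; 24])))) (Lf false [:: 22; 1; 14; 10; 19]))) (Lf false [:: 1; 19; 20; 23; 24])))) (Nd 20 (Nd 14 (Lf true [:: 8; 14; 18; 20]) (Nd 1 (Nd 10 (Lf true [:: 1; 10; 4; 5]) (Nd 22 (Nd 11 (Lf true [:: 1; 11; 4; 22]) (Nd 15 (Lf true [:: 8; 15; 18; 20]) (Nd 6 (Nd 25 (Lf true [:: 6; 25; 4; 5]) (Nd 13 (Lf true [:: 1; 13; 4; 5]) (Lf false [:: 19; 0; 25; 12; 13]))) (Lf false [:: 19; 0; 6; 23; 24])))) (Lf false [:: 22; 0; 14; 10; 19]))) (Lf false [:: 19; 0; 1; 12; 23]))) (Lf false [:: 0; 19; 20; 23; 24])))) (Nd 2 (Nd 10 (Lf true [:: 2; 10; 4; 5]) (Nd 0 (Nd 11 (Lf true [:: 0; 11; 4; 5]) (Nd 1 (Nd 12 (Lf true [:: 1; 12; 4; 5]) (Nd 14 (Nd 6 (Lf true [:: 6; 14; 4; 5]) (Lf false [:: 19; 6; 9; 23; 24])) (Nd 3 (Nd 25 (Lf true [:: 3; 25; 4; 5]) (Nd 13 (Lf true [:: 0;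 13; 4; 5]) (Lf false [:: 19; 9; 25; 12; 13]))) (Lf false [:: 9; 3; 14; 10; 11])))) (Lf false [:: 19; 1; 9; 23; 24]))) (Lf false [:: 19; 0; 9; 23; 24]))) (Lf false [:: 9; 2; 19; 23; 24]))) (Nd 2 (Nd 10 (Lf true [:: 2; 10; 4; 5]) (Nd 9 (Nd 11 (Lf true [:: 2; 11; 4; 9]) (Nd 0 (Nd 12 (Lf true [:: 0; 12; 4; 5]) (Nd 1 (Nd 13 (Lf true [:: 1; 13; 4; 5]) (Nd 16 (Nd 20 (Lf true [:: 16; 20; 0; 1]) (Lf false [:: 8; 19; 20; 23; 24])) (Lf false [:: 8; 12; 13; 16; 19]))) (Lf false [:: 19; 1; 8; 12; 23]))) (Lf false [:: 19; 0; 8; 23; 24]))) (Lf false [:: 19; 8; 9; 23; 24]))) (Lf false [:: 8; 2; 19; 23; 24]))) (Nd 0 (Nd 12 (Lf true [:: 0; 12; 4; 18]) (Nd 1 (Nd 13 (Lf true [:: 1; 13; 4; 18]) (Nd 25 (Nd 6 (Lf true [:: 6; 25; 4; 18]) (Lf false [:: 6; 5; 19; 23; 24])) (Lf false [:: 25; 5; 19; 12; 13]))) (Lf false [:: 1; 5; 19; 12; 23]))) (Lf false [:: 0; 5; 19; 23; 24]))) (Nd 0 (Nd 5 (Nd 12 (Lf true [:: 0; 12; 5; 18]) (Nd 1 (Nd 13 (Lf true [:: 1; 13; 5; 18]) (Nd 25 (Nd 6 (Lf true [:: 6; 25; 5; 18]) (Lf false [:: 6; 4; 19; 23; 24])) (Lf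 false [:: 25; 4; 19; 12; 13]))) (Lf false [:: 1; 4; 19; 12; 23]))) (Nd 1 (Nd 12 (Lf true [:: 12; 18; 0; 1]) (Nd 8 (Nd 13 (Lf true [:: 13; 18; 0; 8]) (Nd 25 (Nd 9 (Nd 14 (Lf true [:: 14; 18; 8; 9]) (Nd 6 (Nd 15 (Lf true [:: 6; 18; 15; 25]) (Nd 7 (Lf true [:: 18; 25; 6; 7]) (Lf false [:: 7; 4; 5; 14; 15]))) (Lf false [:: 6; 4; 5; 14; 23]))) (Nd 2 (Nd 14 (Nd 6 (Lf true [:: 6; 18; 14; 25]) (Lf false [:: 6; 4; 5; 23; 24])) (Nd 6 (Nd 15 (Lf true [:: 6; 18; 15; 25]) (Nd 7 (Lf true [:: 18; 25; 6; 7]) (Lf false [:: 7; 4; 5; 14; 15]))) (Lf false [:: 6; 4; 5; 14; 23]))) (Lf false [:: 2; 4; 9; 23; 24]))) (Lf false [:: 25; 4; 5; 12; 13]))) (Nd 2 (Nd 9 (Nd 13 (Lf true [:: 13; 18; 0; 9]) (Nd 16 (Nd 10 (Lf true [:: 9; 10; 2; 16]) (Nd 3 (Nd 11 (Lf true [:: 9; 11; 2; 3]) (Nd 14 (Nd 20 (Lf true [:: 9; 14; 18; 20]) (Lf false [:: 8; 19; 20; 23; 24])) (Lf false [:: 14; 4; 5; 10; 11]))) (Lf false [:: 3; 4; 5; 10; 23]))) (Lf false [:: 8; 12; 13; 16; 19]))) (Lf false [:: 19; 8; 9; 12; 23])) (Lf false [:: 2; 4; 8; 23; 24])))) (Lf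 false [:: 1; 4; 5; 23; 24]))) (Lf false [:: 0; 4; 19; 23; 24])))) (Nd 19 (Nd 4 (Nd 5 (Nd 8 (Nd 9 (Nd 12 (Lf true [:: 12; 19; 8; 9]) (Nd 0 (Nd 10 (Lf true [:: 0; 10; 4; 5]) (Nd 1 (Nd 11 (Lf true [:: 1; 11; 4; 5]) (Nd 14 (Lf true [:: 14; 19; 8; 9]) (Nd 15 (Lf true [:: 15; 19; 8; 9]) (Nd 22 (Lf true [:: 19; 22; 0; 1]) (Lf false [:: 22; 10; 11; 14; 15]))))) (Nd 20 (Nd 14 (Lf true [:: 8; 14; 19; 20]) (Nd 22 (Nd 11 (Lf true [:: 0; 11; 4; 22]) (Nd 15 (Lf true [:: 8; 15; 19; 20]) (Nd 6 (Nd 25 (Lf true [:: 6; 25; 4; 5]) (Nd 13 (Lf true [:: 0; 13; 4; 5]) (Lf false [:: 18; 1; 25; 12; 13]))) (Lf false [:: 18; 1; 6; 23; 24])))) (Lf false [:: 22; 1; 14; 10; 18]))) (Lf false [:: 1; 18; 20; 23; 24])))) (Nd 20 (Nd 14 (Lf true [:: 8; 14; 19; 20]) (Nd 1 (Nd 10 (Lf true [:: 1; 10; 4; 5]) (Nd 22 (Nd 11 (Lf true [:: 1; 11; 4; 22]) (Nd 15 (Lf true [:: 8; 15; 19; 20]) (Nd 6 (Nd 25 (Lf true [:: 6; 25; 4; 5]) (Nd 13 (Lf true [:: 1; 13; 4; 5]) (Lf false [:: 18; 0; 25; 12; 13]))) (Lf false [:: 18; 0; 6; 23; 24])))) (Lf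 false [:: 22; 0; 14; 10; 18]))) (Lf false [:: 18; 0; 1; 12; 23]))) (Lf false [:: 0; 18; 20; 23; 24])))) (Nd 2 (Nd 10 (Lf true [:: 2; 10; 4; 5]) (Nd 0 (Nd 11 (Lf true [:: 0; 11; 4; 5]) (Nd 1 (Nd 12 (Lf true [:: 1; 12; 4; 5]) (Nd 14 (Nd 6 (Lf true [:: 6; 14; 4; 5]) (Lf false [:: 18; 6; 9; 23; 24])) (Nd 3 (Nd 25 (Lf true [:: 3; 25; 4; 5]) (Nd 13 (Lf true [:: 0; 13; 4; 5]) (Lf false [:: 18; 9; 25; 12; 13]))) (Lf false [:: 9; 3; 14; 10; 11])))) (Lf false [:: 18; 1; 9; 23; 24]))) (Lf false [:: 18; 0; 9; 23; 24]))) (Lf false [:: 9; 2; 18; 23; 24]))) (Nd 2 (Nd 10 (Lf true [:: 2; 10; 4; 5]) (Nd 9 (Nd 11 (Lf true [:: 2; 11; 4; 9]) (Nd 0 (Nd 12 (Lf true [:: 0; 12; 4; 5]) (Nd 1 (Nd 13 (Lf true [:: 1; 13; 4; 5]) (Nd 16 (Nd 20 (Lf true [:: 16; 20; 0; 1]) (Lf false [:: 8; 18; 20; 23; 24])) (Lf false [:: 8; 12; 13; 16; 18]))) (Lf false [:: 18; 1; 8; 12; 23]))) (Lf false [:: 18; 0; 8; 23; 24]))) (Lf false [:: 18; 8; 9; 23; 24]))) (Lf false [:: 8; 2; 18; 23; 24]))) (Nd 0 (Nd 12 (Lf true [:: 0; 12; 4; 19]) (Nd 1 (Nd 13 (Lf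 true [:: 1; 13; 4; 19]) (Nd 25 (Nd 6 (Lf true [:: 6; 25; 4; 19]) (Lf false [:: 6; 5; 18; 23; 24])) (Lf false [:: 25; 5; 18; 12; 13]))) (Lf false [:: 1; 5; 18; 12; 23]))) (Lf false [:: 0; 5; 18; 23; 24]))) (Nd 0 (Nd 5 (Nd 12 (Lf true [:: 0; 12; 5; 19]) (Nd 1 (Nd 13 (Lf true [:: 1; 13; 5; 19]) (Nd 25 (Nd 6 (Lf true [:: 6; 25; 5; 19]) (Lf false [:: 6; 4; 18; 23; 24])) (Lf false [:: 25; 4; 18; 12; 13]))) (Lf false [:: 1; 4; 18; 12; 23]))) (Nd 1 (Nd 12 (Lf true [:: 12; 19; 0; 1]) (Nd 8 (Nd 13 (Lf true [:: 13; 19; 0; 8]) (Nd 25 (Nd 9 (Nd 14 (Lf true [:: 14; 19; 8; 9]) (Nd 6 (Nd 15 (Lf true [:: 6; 19; 15; 25]) (Nd 7 (Lf true [:: 19; 25; 6; 7]) (Lf false [:: 7; 4; 5; 14; 15]))) (Lf false [:: 6; 4; 5; 14; 23]))) (Nd 2 (Nd 14 (Nd 6 (Lf true [:: 6; 19; 14; 25]) (Lf false [:: 6; 4; 5; 23; 24])) (Nd 6 (Nd 15 (Lf true [:: 6; 19; 15; 25]) (Nd 7 (Lf true [:: 19; 25; 6; 7]) (Lf false [:: 7; 4; 5; 14; 15]))) (Lf false [:: 6; 4; 5; 14; 23]))) (Lf false [:: 2; 4; 9; 23; 24]))) (Lf false [:: 25; 4; 5; 12; 13]))) (Nd 2 (Nd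 9 (Nd 13 (Lf true [:: 13; 19; 0; 9]) (Nd 16 (Nd 10 (Lf true [:: 9; 10; 2; 16]) (Nd 3 (Nd 11 (Lf true [:: 9; 11; 2; 3]) (Nd 14 (Nd 20 (Lf true [:: 9; 14; 19; 20]) (Lf false [:: 8; 18; 20; 23; 24])) (Lf false [:: 14; 4; 5; 10; 11]))) (Lf false [:: 3; 4; 5; 10; 23]))) (Lf false [:: 8; 12; 13; 16; 18]))) (Lf false [:: 18; 8; 9; 12; 23])) (Lf false [:: 2; 4; 8; 23; 24])))) (Lf false [:: 1; 4; 5; 23; 24]))) (Lf false [:: 0; 4; 18; 23; 24]))) (Nd 0 (Nd 4 (Nd 5 (Nd 10 (Lf true [:: 0; 10; 4; 5]) (Nd 8 (Nd 9 (Nd 1 (Nd 11 (Lf true [:: 1; 11; 4; 5]) (Nd 14 (Nd 6 (Lf true [:: 6; 14; 4; 5]) (Lf false [:: 6; 18; 19; 23; 24])) (Nd 6 (Nd 15 (Lf true [:: 6; 15; 4; 5]) (Nd 7 (Nd 25 (Lf true [:: 4; 25; 6; 7]) (Nd 16 (Nd 12 (Lf true [:: 0; 12; 4; 16]) (Nd 13 (Lf true [:: 0; 13; 4; 5]) (Lf false [:: 25; 12; 13; 18; 19]))) (Nd 20 (Nd 21 (Nd 17 (Nd 12 (Lf true [:: 0; 12; 4; 5]) (Nd 13 (Lf true [:: 0; 13; 4; 5]) (Lf false [:: 25; 12; 13; 18; 19]))) (Nd 12 (Lf true [:: 0; 12; 4; 5]) (Nd 13 (Lf true [:: 0; 13;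 4; 5]) (Lf false [:: 25; 12; 13; 18; 19])))) (Nd 17 (Nd 12 (Lf true [:: 0; 12; 4; 5]) (Nd 13 (Lf true [:: 0; 13; 4; 5]) (Lf false [:: 25; 12; 13; 18; 19]))) (Nd 12 (Lf true [:: 0; 12; 4; 5]) (Nd 13 (Lf true [:: 0; 13; 4; 5]) (Lf false [:: 25; 12; 13; 18; 19]))))) (Nd 21 (Nd 17 (Nd 12 (Lf true [:: 0; 12; 4; 5]) (Nd 13 (Lf true [:: 0; 13; 4; 5]) (Lf false [:: 25; 12; 13; 18; 19]))) (Nd 12 (Lf true [:: 0; 12; 4; 5]) (Nd 13 (Lf true [:: 0; 13; 4; 5]) (Lf false [:: 25; 12; 13; 18; 19])))) (Nd 17 (Nd 12 (Lf true [:: 0; 12; 4; 5]) (Nd 13 (Lf true [:: 0; 13; 4; 5]) (Lf false [:: 25; 12; 13; 18; 19]))) (Lf false [:: 17; 14; 15; 20; 21])))))) (Lf false [:: 7; 14; 15; 18; 19]))) (Lf false [:: 6; 14; 23; 18; 19])))) (Lf false [:: 1; 18; 19; 23; 24])) (Lf false [:: 9; 18; 19; 23; 24])) (Lf false [:: 8; 18; 19; 23; 24]))) (Nd 1 (Nd 10 (Lf true [:: 4; 10; 0; 1]) (Nd 8 (Nd 9 (Nd 14 (Nd 11 (Lf true [:: 4; 11; 0; 14]) (Nd 15 (Nd 6 (Lf true [:: 4; 6; 14; 15]) (Lf false [:: 6; 5; 18; 23; 24])) (Nd 2 (Nd 6 (Nd 25 (Lf true [:: 4; 6; 14; 25]) (Nd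 7 (Lf true [:: 4; 14; 6; 7]) (Lf false [:: 7; 5; 18; 15; 25]))) (Lf false [:: 6; 5; 18; 15; 23])) (Lf false [:: 5; 2; 15; 10; 11])))) (Nd 6 (Nd 15 (Nd 25 (Lf true [:: 4; 6; 15; 25]) (Nd 7 (Lf true [:: 4; 15; 6; 7]) (Lf false [:: 7; 5; 18; 14; 25]))) (Nd 7 (Nd 25 (Lf true [:: 4; 25; 6; 7]) (Nd 11 (Lf true [:: 4; 11; 0; 1]) (Lf false [:: 5; 10; 11; 14; 15]))) (Lf false [:: 5; 7; 10; 14; 15]))) (Lf false [:: 6; 5; 18; 14; 23]))) (Lf false [:: 9; 18; 19; 23; 24])) (Lf false [:: 8; 18; 19; 23; 24]))) (Lf false [:: 1; 5; 18; 23; 24]))) (Nd 1 (Nd 5 (Nd 10 (Lf true [:: 5; 10; 0; 1]) (Nd 8 (Nd 9 (Nd 14 (Nd 11 (Lf true [:: 5; 11; 0; 14]) (Nd 15 (Nd 6 (Lf true [:: 5; 6; 14; 15]) (Lf false [:: 6; 4; 18; 23; 24])) (Nd 2 (Nd 6 (Nd 25 (Lf true [:: 5; 6; 14; 25]) (Nd 7 (Lf true [:: 5; 14; 6; 7]) (Lf false [:: 7; 4; 18; 15; 25]))) (Lf false [:: 6; 4; 18; 15; 23])) (Lf false [:: 4; 2; 15; 10; 11])))) (Nd 6 (Nd 15 (Nd 25 (Lf true [:: 5; 6; 15; 25]) (Nd 7 (Lf true [:: 5; 15; 6; 7]) (Lf false [:: 7; 4; 18; 14; 25]))) (Nd 7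 (Nd 25 (Lf true [:: 5; 25; 6; 7]) (Nd 11 (Lf true [:: 5; 11; 0; 1]) (Lf false [:: 4; 10; 11; 14; 15]))) (Lf false [:: 4; 7; 10; 14; 15]))) (Lf false [:: 6; 4; 18; 14; 23]))) (Lf false [:: 9; 18; 19; 23; 24])) (Lf false [:: 8; 18; 19; 23; 24]))) (Nd 2 (Nd 8 (Nd 9 (Nd 10 (Lf true [:: 2; 10; 8; 9]) (Nd 3 (Nd 11 (Lf true [:: 3; 11; 8; 9]) (Nd 14 (Nd 20 (Lf true [:: 14; 20; 8; 9]) (Nd 15 (Nd 21 (Lf true [:: 8; 21; 14; 15]) (Nd 17 (Nd 6 (Lf true [:: 6; 17; 14; 15]) (Lf false [:: 6; 4; 5; 23; 24])) (Lf false [:: 17; 20; 21; 23; 24]))) (Lf false [:: 15; 4; 5; 10; 11]))) (Lf false [:: 14; 4; 5; 10; 11]))) (Lf false [:: 3; 4; 5; 10; 23]))) (Lf false [:: 9; 18; 19; 23; 24])) (Lf false [:: 8; 18; 19; 23; 24])) (Lf false [:: 2; 4; 5; 23; 24]))) (Lf false [:: 1; 4; 18; 23; 24]))) (Lf false [:: 0; 18; 19; 23; 24])))))).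

Definition en (i j : nat) : bool := j \in nth [::] adjl i.
Definition E : rel 'I_26 := fun i j => en i j.
Definition io (x : nat) : 'I_26 := inord x.

Definition pat (col : bool) : seq nat := if col then [:: 0; 1; 2; 2] else [:: 0; 1; 1; 2; 2].

Definition goodL (col : bool) (vs : seq nat) (path : seq (nat * bool)) : bool :=
  [&& size vs == size (pat col), all (fun x => x < 26) vs, uniq vs,
      all (fun x => (x, col) \in path) vs &
      all (fun i => all (fun j => (nth 0 (pat col) i != nth 0 (pat col) j) ==>
                                  en (nth 0 vs i) (nth 0 vs j)) (iota 0 (size vs))) (iota 0 (size vs))].

Fixpoint check (path : seq (nat * bool)) (t : tree) : bool :=
  match t with
  | Nd v t1 t2 => check ((v, true) :: path) t1 && check ((v, false) :: path) t2
  | Lf col vs => goodL col vs path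
  end.

Lemma ioK x : x < 26 -> nat_of_ord (io x) = x.
Proof. by move=> h; rewrite /io inordK. Qed.

Lemma mem_iota_lt i n : i < n -> i \in iota 0 n.
Proof. by rewrite mem_iota. Qed.

Lemma leaf_sound p q s (idx : tripV p q s -> nat) col vs path (R : {set 'I_26}) :
  injective idx -> (forall u, idx u < size (pat col)) ->
  (forall u, trip_part u = nth 0 (pat col) (idx u)) ->
  goodL col vs path ->
  (forall x b, (x, b) \in path -> (io x \in R) = b) ->
  contains_Kpqs E (if col then R else ~: R) p q s.
Proof.
move=> inj hb hp /and5P [/eqP hs /allP hlt hu /allP hm /allP he] Hp.
have hb' u : idx u < size vs by rewrite hs.
exists (fun u => io (nth 0 vs (idx u))); split.
- move=> u v /(congr1 (@nat_of_ord _)); rewrite !ioK ?hlt ?mem_nth //.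
  by move/eqP; rewrite nth_uniq // => /eqP /inj.
- move=> u; have := Hp _ _ (hm _ (mem_nth 0 (hb' u))) => h.
  by case: col {hb hp hs hm he hb'} h => h; rewrite ?in_setC h.
- move=> u v; rewrite /trip_edge !hp => huv.
  have /allP := he _ (mem_iota_lt (hb' u)).
  move=> /(_ _ (mem_iota_lt (hb' v))) /implyP /(_ huv).
  by rewrite /E !ioK ?hlt ?mem_nth.
Qed.

Definition idx112 (u : tripV 1 1 2) : nat :=
  match u with inl (inl _) => 0 | inl (inr _) => 1 | inr i => 2 + val i end.
Definition idx122 (u : tripV 1 2 2) : nat :=
  match u with inl (inl _) => 0 | inl (inr i) => 1 + val i | inr i => 3 + val i end.

Lemma idx112_inj : injective idx112.
Proof.
move=> [[u|u]|u] [[v|v]|v] //=; rewrite ?ord1 //.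
by move=> /eqP; rewrite eqn_add2l => /eqP /val_inj ->.
Qed.
Lemma idx122_inj : injective idx122.
Proof.
move=> [[u|u]|u] [[v|v]|v] //=; rewrite ?ord1 //.
- by move=> /eqP; rewrite eqn_add2l => /eqP /val_inj ->.
- by case: u => [[|[|]]] //; case: v => [[|[|]]].
- by case: u => [[|[|]]] //; case: v => [[|[|]]].
- by move=> /eqP; rewrite eqn_add2l => /eqP /val_inj ->.
Qed.
Lemma idx112_b u : idx112 u < size (pat true).
Proof. by case: u => [[u|u]|[[|[|]]]]. Qed.
Lemma idx122_b u : idx122 u < size (pat false).
Proof. by case: u => [[u|[[|[|]]]]|[[|[|]]]]. Qed.
Lemma idx112_p u : trip_part u = nth 0 (pat true) (idx112 u).
Proof. by case: u => [[u|u]|[[|[|]]]]. Qed.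
Lemma idx122_p u : trip_part u = nth 0 (pat false) (idx122 u).
Proof. by case: u => [[u|[[|[|]]]]|[[|[|]]]]. Qed.

Lemma check_sound (R : {set 'I_26}) t : forall path,
  check path t ->
  (forall x b, (x, b) \in path -> (io x \in R) = b) ->
  contains_Kpqs E R 1 1 2 \/ contains_Kpqs E (~: R) 1 2 2.
Proof.
elim: t => [v t1 IH1 t2 IH2 | col vs] path /=.
- move=> /andP [h1 h2] Hp.
  case hv: (io v \in R).
  + apply: (IH1 _ h1) => x bb; rewrite inE => /orP [/eqP [-> ->] // | ]; exact: Hp.
  + apply: (IH2 _ h2) => x bb; rewrite inE => /orP [/eqP [-> ->] // | ]; exact: Hp.
- case: col => h Hp.
  + left; exact: (leaf_sound idx112_inj idx112_b idx112_p h Hp).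
  + right; exact: (leaf_sound idx122_inj idx122_b idx122_p h Hp).
Qed.

Lemma check_T0 : check [::] T0.
Proof. by vm_compute. Qed.

Definition I26 := iota 0 26.
Lemma sym_ok : all (fun x => all (fun y => en x y == en y x) I26) I26.
Proof. by vm_compute. Qed.
Lemma irr_ok : all (fun x => ~~ en x x) I26.
Proof. by vm_compute. Qed.
Lemma k4_ok : all (fun a => all (fun b => en a b ==> all (fun c => en a c && en b c ==>
   all (fun d => ~~ [&& en a d, en b d & en c d]) I26) I26) I26) I26.
Proof. by vm_compute. Qed.

Lemma inI (x : 'I_26) : nat_of_ord x \in I26.
Proof. by rewrite /I26 mem_iota /=. Qed.

Lemma k4_nat a b c d : a \in I26 -> b \in I26 -> c \in I26 -> d \in I26 ->
  en a b -> en a c -> en a d -> en b c -> en b d -> en c d -> False.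
Proof.
move=> Ha Hb Hc Hd ab ac ad bc bd cd.
have /allP H1 := k4_ok; have /allP H2 := H1 a Ha.
have := H2 b Hb; rewrite ab implyTb => /allP H3.
have := H3 c Hc; rewrite ac bc andbT implyTb => /allP H4.
by have := H4 d Hd; rewrite ad bd cd.
Qed.

Theorem mainTheorem13 :
  exists e : rel 'I_26,
    [/\ simple_graph e, Kk_free e 4 &
        forall R : {set 'I_26},
          contains_Kpqs e R 1 1 2 \/ contains_Kpqs e (~: R) 1 2 2].
Proof.
exists E; split.
- split.
  + move=> x y; apply/eqP.
    have /allP H1 := sym_ok; have /allP H2 := H1 _ (inI x); exact: H2 _ (inI y).
  + by move=> x; apply/negbTE; have /allP H1 := irr_ok; exact: H1 _ (inI x).
- move=> [f [_ H]].
  have H01 := H (@Ordinal 4 0 isT) (@Ordinal 4 1 isT) isT.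
  have H02 := H (@Ordinal 4 0 isT) (@Ordinal 4 2 isT) isT.
  have H03 := H (@Ordinal 4 0 isT) (@Ordinal 4 3 isT) isT.
  have H12 := H (@Ordinal 4 1 isT) (@Ordinal 4 2 isT) isT.
  have H13 := H (@Ordinal 4 1 isT) (@Ordinal 4 3 isT) isT.
  have H23 := H (@Ordinal 4 2 isT) (@Ordinal 4 3 isT) isT.
  exact: (k4_nat (inI _) (inI _) (inI _) (inI _) H01 H02 H03 H12 H13 H23).
- move=> R; apply: (check_sound check_T0) => x b; by rewrite in_nil.
Qed.
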